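(* Let $(\Gamma,f,\mu)$ be a measured Reeb graph, $\mathfrak{c}$ a balanced circulation function on $\Gamma$, and $\tilde V$ the set of exceptional points. Assume that for each exceptional point $x_i\in\tilde V$ there are a neighborhood $U_i$ of $x_i$ and a $1$-form $\beta_i$ on $U_i$ such that for each $x\in U_i\setminus\{x_i\}$, $\operatorname{sign}(\beta_i/df)(x)=-\operatorname{sign}\mathfrak{c}(x)$. Then there exists a $1$-form $\beta$ on $\Gamma$ which does not vanish on $\Gamma\setminus\tilde V$, coincides with $\beta_i$ in a neighborhood of each $x_i\in\tilde V$, and is such that the form $f\beta$ is exact.
   Context: Reeb graph: a finite connected oriented graph $\Gamma$ with continuous $f\colon\Gamma\to\mathbb{R}$ strictly increasing along edges; vertices are $1$-valent (of boundary or non-boundary type) or $3$-valent with two incoming and one outgoing edge or vice versa; at a $3$-valent vertex the trunk $e_0$ is the edge alone in its direction, the other two $e_1,e_2$ are branches. A log-smooth measure $\mu$: smooth non-vanishing density $d\mu/df$ at interior points and $1$-valent vertices; near each $3$-valent $v$, with $\tilde f=f-f(v)$, $\mu([v,x])=\varepsilon_i\psi(\tilde f(x))\ln|\tilde f(x)|+\eta_i(\tilde f(x))$ for $x\in e_i$ near $v$, where $\varepsilon_0=2,\varepsilon_1=\varepsilon_2=-1$ and $\psi,\eta_i$ are smooth near $0$ with $\psi(0)=0,\psi'(0)\neq0$, $\eta_0+\eta_1+\eta_2=0$. A measured Reeb graph is a Reeb graph with a log-smooth measure. With $V(\Gamma)$ the vertex set, a circulation function is a continuous $\mathfrak{c}\colon\Gamma\setminus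 V(\Gamma)\to\mathbb{R}$ with finite limits at vertices along each edge, such that $\mathfrak{c}(y)-\mathfrak{c}(x)=\int_{[x,y]}f\,d\mu$ for interior points $x,y$ of an edge pointing from $x$ to $y$, and at every non-boundary vertex the sum of limits along incoming edges equals the sum of limits along outgoing edges. It is balanced if at each $3$-valent vertex $v$ its limits $c_0(v),c_1(v),c_2(v)$ along the three adjacent edges are non-zero and of the same sign. The set of exceptional points is $\tilde V=V(\Gamma)\cup\{x\in\Gamma: f(x)=0\}\cup\{x\in\Gamma:\mathfrak{c}(x)=0\}$. A $1$-form on $\Gamma$ is an expression which locally can be written $g(f)\,df$ with $g$ a smooth function of $f$; $\beta/df$ denotes the corresponding function $g$. A $1$-form $\beta$ is exact if $\int_\ell\beta=0$ for every cycle $\ell$ in $\Gamma$. *)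

(* Defs.v *)
From Stdlib Require Import Reals.
From Coquelicot Require Import Coquelicot.
From mathcomp Require Import ssreflect ssrfun ssrbool eqtype ssrnat seq choice fintype fingraph.

Set Implicit Arguments.
Unset Strict Implicit.
Unset Printing Implicit Defensive.

Open Scope R_scope.

(** Points of the geometric realization of a Reeb graph:
    a vertex [PV v], or the interior point [PE e t] of edge [e] at which f = t
    (an edge is parametrized by the value of f, f being strictly increasing on it).
    [PE e t] is a genuine point only when f(src e) < t < f(tgt e) (see [onG]). *)
Inductive gpoint (V E : Type) : Type :=
  | PV of V
  | PE of E & R.
Arguments PV {V E}.
Arguments PE {V E}.

Definition sgn (x : R) : R :=
  if Rlt_dec 0 x then 1 else if Rlt_dec x 0 then -1 else 0.

Definition smooth_on (g : R -> R) (a d : R) : Prop :=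
  forall (n : nat) (y : R), Rabs (y - a) < d -> ex_derive_n g n y.

Definition sumE (E : finType) (P : pred E) (g : E -> R) : R :=
  foldr Rplus 0 (map g (filter P (enum E))).

Section Reeb.

Variables (V E : finType) (src tgt : E -> V) (fv : V -> R).

Definition indeg (v : V) : nat := #|[pred e : E | tgt e == v]|.
Definition outdeg (v : V) : nat := #|[pred e : E | src e == v]|.
Definition deg (v : V) : nat := (indeg v + outdeg v)%N.
Definition incident (v : V) (e : E) : bool := (src e == v) || (tgt e == v).

Definition adj : rel V := fun u w =>
  [exists e : E, ((src e == u) && (tgt e == w)) || ((src e == w) && (tgt e == u))].

Definition is_reeb_graph (bnd : pred V) : Prop :=
  (forall e, fv (src e) < fv (tgt e)) /\
  (forall u w, connect adj u w) /\
  (forall v, (deg v == 1)%N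
             || ((indeg v == 2)%N && (outdeg v == 1)%N)
             || ((indeg v == 1)%N && (outdeg v == 2)%N)) /\
  (forall v, bnd v -> deg v = 1%N).

Definition trunk (v : V) (e : E) : bool :=
  incident v e && (if src e == v then (outdeg v == 1)%N else (indeg v == 1)%N).

Definition eps (v : V) (e : E) : R := if trunk v e then 2 else -1.

Definition onG (x : gpoint V E) : Prop :=
  match x with
  | PV _ => True
  | PE e t => fv (src e) < t < fv (tgt e)
  end.

Definition fpt (x : gpoint V E) : R :=
  match x with PV v => fv v | PE _ t => t end.

Definition is_vertex (x : gpoint V E) : Prop :=
  match x with PV _ => True | PE _ _ => False end.

Definition inball (x : gpoint V E) (d : R) (y : gpoint V E) : Prop :=
  match x, y with
  | PV v, PV w => v = w
  | PV v, PE e s => incident v e /\ Rabs (s - fv v) < d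
  | PE e t, PE e' s => e = e' /\ Rabs (s - t) < d
  | PE _ _, PV _ => False
  end.

Definition nbhd (W : gpoint V E -> Prop) (x : gpoint V E) : Prop :=
  exists d, 0 < d /\ forall y, onG y -> inball x d y -> W y.

Definition openG (W : gpoint V E -> Prop) : Prop :=
  forall x, onG x -> W x -> nbhd W x.

(** A 1-form on W, represented by the function b = beta/df: near every point of
    W it is g(f) df with g a smooth function of f. *)
Definition oneform_on (W : gpoint V E -> Prop) (b : gpoint V E -> R) : Prop :=
  forall x, onG x -> W x ->
    exists d (g : R -> R), 0 < d /\ smooth_on g (fpt x) d /\
      forall y, onG y -> inball x d y -> W y -> b y = g (fpt y).

Definition bedge (b : gpoint V E -> R) (e : E) (t : R) : R :=
  if Rle_dec t (fv (src e)) then b (PV (src e))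
  else if Rle_dec (fv (tgt e)) t then b (PV (tgt e))
  else b (PE e t).

(** integral of the 1-form f*beta along the edge e (in its orientation) *)
Definition edge_int (b : gpoint V E -> R) (e : E) : R :=
  RInt (fun t => t * bedge b e t) (fv (src e)) (fv (tgt e)).

(** cycles: closed walks of oriented edges (true = traversed forward) *)
Definition step_start (s : E * bool) : V := if s.2 then src s.1 else tgt s.1.
Definition step_end (s : E * bool) : V := if s.2 then tgt s.1 else src s.1.

Fixpoint chain (s : E * bool) (l : seq (E * bool)) : Prop :=
  match l with
  | [::] => True
  | s' :: l' => step_end s = step_start s' /\ chain s' l'
  end.

Definition closed_walk (l : seq (E * bool)) : Prop :=
  match l with
  | [::] => False
  | s :: l' => chain s l' /\ step_end (last s l') = step_start s
  end.

Definition walk_int (b : gpoint V E -> R) (l : seq (E * bool)) : R :=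
  foldr Rplus 0 (map (fun s => if s.2 then edge_int b s.1 else - edge_int b s.1) l).

(** the 1-form f*beta (beta with beta/df = b) is exact *)
Definition exact_f_form (b : gpoint V E -> R) : Prop :=
  forall l, closed_walk l -> walk_int b l = 0.

(** ---- Log-smooth measure ----
    On each edge e the measure mu is described by its distribution function
    M e (as a function of f): mu of the part of e between f-values s < t is
    M e t - M e s; its density d mu / df is rho e. *)
Section Measure.
Variables (M rho : E -> R -> R).

Definition distribution_ok : Prop :=
  forall e,
    (forall t, fv (src e) < t < fv (tgt e) -> is_derive (M e) t (rho e t)) /\
    (forall t, fv (src e) <= t <= fv (tgt e) ->
       filterlim (M e) (within (fun s => fv (src e) <= s <= fv (tgt e)) (locally t))
                 (locally (M e t))).

Definition interior_density_ok : Prop :=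
  forall e t, fv (src e) < t < fv (tgt e) ->
    0 < rho e t /\ forall n : nat, ex_derive_n (rho e) n t.

Definition univalent_density_ok : Prop :=
  forall v e, (deg v == 1)%N -> incident v e ->
    exists d (g : R -> R), 0 < d /\ smooth_on g (fv v) d /\ g (fv v) <> 0 /\
      forall t, fv (src e) < t < fv (tgt e) -> Rabs (t - fv v) < d -> rho e t = g t.

(** mu([v, x]) for x on the edge e incident to v with f(x) = t *)
Definition mu_from (v : V) (e : E) (t : R) : R :=
  if src e == v then M e t - M e (fv v) else M e (fv v) - M e t.

Definition trivalent_log_ok : Prop :=
  forall v, (deg v == 3)%N ->
    exists d (psi : R -> R) (eta : E -> R -> R),
      0 < d /\ smooth_on psi 0 d /\ psi 0 = 0 /\ Derive psi 0 <> 0 /\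
      (forall e, incident v e -> smooth_on (eta e) 0 d) /\
      (forall s, Rabs s < d -> sumE (incident v) (fun e => eta e s) = 0) /\
      (forall e t, incident v e -> fv (src e) < t < fv (tgt e) -> Rabs (t - fv v) < d ->
         mu_from v e t
         = eps v e * psi (t - fv v) * ln (Rabs (t - fv v)) + eta e (t - fv v)).

Definition log_smooth : Prop :=
  distribution_ok /\ interior_density_ok /\ univalent_density_ok /\ trivalent_log_ok.

End Measure.

(** ---- Circulation functions ----
    c e t is the value of the circulation function at the interior point of e
    where f = t; cs e / ct e are its limits at the source / target of e. *)
Section Circulation.
Variables (rho : E -> R -> R) (bnd : pred V) (c : E -> R -> R).

Definition circ_limits (cs ct : E -> R) : Prop :=
  forall e,
    (forall t, fv (src e) < t < fv (tgt e) -> continuous (c e) t) /\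
    filterlim (c e) (at_right (fv (src e))) (locally (cs e)) /\
    filterlim (c e) (at_left (fv (tgt e))) (locally (ct e)) /\
    (forall x y, fv (src e) < x -> x < y -> y < fv (tgt e) ->
       c e y - c e x = RInt (fun t => t * rho e t) x y).

Definition kirchhoff (cs ct : E -> R) : Prop :=
  forall v, ~~ bnd v ->
    sumE (fun e => tgt e == v) ct = sumE (fun e => src e == v) cs.

Definition limit_at (cs ct : E -> R) (v : V) (e : E) : R :=
  if src e == v then cs e else ct e.

Definition balanced_at (cs ct : E -> R) : Prop :=
  forall v, (deg v == 3)%N ->
    (forall e, incident v e -> 0 < limit_at cs ct v e) \/
    (forall e, incident v e -> limit_at cs ct v e < 0).

Definition balanced_circulation : Prop :=
  exists cs ct, circ_limits cs ct /\ kirchhoff cs ct /\ balanced_at cs ct.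

Definition cval (x : gpoint V E) : R :=
  match x with PV _ => 0 | PE e t => c e t end.

Definition exceptional (x : gpoint V E) : Prop :=
  onG x /\ match x with PV _ => True | PE e t => t = 0 \/ c e t = 0 end.

End Circulation.

End Reeb.

(* Main.v *)
Require Import Defs.
From Stdlib Require Import Reals.
From Stdlib Require Import Lra Lia Psatz ClassicalEpsilon Classical.
From Coquelicot Require Import Coquelicot.
From mathcomp Require Import ssreflect ssrfun ssrbool eqtype ssrnat seq choice fintype fingraph.
From mathcomp Require Import path.
Open Scope R_scope.

Inductive PolyD : (R -> R) -> (R -> R) -> Prop :=
| PD_const c : PolyD (fun _ => c) (fun _ => 0)
| PD_id : PolyD (fun u => u) (fun _ => 1)
| PD_plus f f' g g' : PolyD f f' -> PolyD g g' ->
    PolyD (fun u => f u + g u) (fun u => f' u + g' u)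
| PD_mult f f' g g' : PolyD f f' -> PolyD g g' ->
    PolyD (fun u => f u * g u) (fun u => f' u * g u + f u * g' u).

Lemma PolyD_derive f f' : PolyD f f' -> forall u, is_derive f u (f' u).
Proof.
induction 1; intro u.
- apply: is_derive_const.
- apply: is_derive_id.
- apply: is_derive_plus; auto.
- apply: is_derive_mult; auto. intros; apply Rmult_comm.
Qed.

Lemma PolyD_next f f' : PolyD f f' -> exists f'', PolyD f' f''.
Proof.
induction 1.
- eexists; apply PD_const.
- eexists; apply PD_const.
- destruct IHPolyD1 as [a Ha]; destruct IHPolyD2 as [b Hb].
  eexists; apply PD_plus; eauto.
- destruct IHPolyD1 as [a Ha]; destruct IHPolyD2 as [b Hb].
  eexists; apply PD_plus; apply PD_mult; eauto.
Qed.

Lemma PolyD_bound f f' : PolyD f f' ->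
  exists C k, 0 <= C /\ forall u, 1 <= u -> Rabs (f u) <= C * u ^ k.
Proof.
induction 1.
- exists (Rabs c), 0%nat; split; [apply Rabs_pos|]; intros; simpl; lra.
- exists 1, 1%nat; split; [lra|]; intros; simpl. rewrite Rabs_right; lra.
- destruct IHPolyD1 as [C1 [k1 [HC1 H1]]]; destruct IHPolyD2 as [C2 [k2 [HC2 H2]]].
  exists (C1 + C2), (Nat.add k1 k2); split; [lra|]; intros u Hu.
  have p1: 1 <= u ^ k1 by apply pow_R1_Rle.
  have p2: 1 <= u ^ k2 by apply pow_R1_Rle.
  rewrite pow_add.
  eapply Rle_trans; [apply Rabs_triang|].
  have h1 := H1 u Hu; have h2 := H2 u Hu.
  have e1: C1 * u ^ k1 <= C1 * (u ^ k1 * u ^ k2) by apply Rmult_le_compat_l; nra.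
  have e2: C2 * u ^ k2 <= C2 * (u ^ k1 * u ^ k2) by apply Rmult_le_compat_l; nra.
  lra.
- destruct IHPolyD1 as [C1 [k1 [HC1 H1]]]; destruct IHPolyD2 as [C2 [k2 [HC2 H2]]].
  exists (C1 * C2), (Nat.add k1 k2); split; [nra|]; intros u Hu.
  rewrite pow_add Rabs_mult.
  have := H1 u Hu; have := H2 u Hu.
  have := Rabs_pos (f u); have := Rabs_pos (g u).
  intros. nra.
Qed.

Lemma exp_nat_mult (m : nat) y : exp (INR m * y) = exp y ^ m.
Proof.
induction m as [|m IH]. simpl. rewrite Rmult_0_l exp_0; lra.
rewrite S_INR Rmult_plus_distr_r Rmult_1_l exp_plus IH /=. ring.
Qed.

Lemma exp_pow_lower (u : R) (m : nat) : 0 <= u -> (0 < m)%coq_nat ->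
  (u / INR m) ^ m <= exp u.
Proof.
intros Hu Hm.
have Hm' : 0 < INR m by apply lt_0_INR.
have E : exp u = exp (u / INR m) ^ m.
{ have Hq : u = INR m * (u / INR m).
  { field. lra. }
  rewrite {1}Hq. apply exp_nat_mult. }
rewrite E. apply pow_incr. split.
- apply Rdiv_le_0_compat; lra.
- have := exp_ineq1_le (u / INR m); lra.
Qed.

Definition hq (q : R -> R) (x : R) : R :=
  if Rlt_dec 0 x then q (/ x) * exp (- / x) else 0.

Definition qnext (q q' : R -> R) (u : R) : R := u * u * (q u + (-1) * q' u).

Lemma qnext_PolyD q q' : PolyD q q' -> exists q2', PolyD (qnext q q') q2'.
Proof.
intros H. destruct (PolyD_next _ _ H) as [q'' H'].
eexists. unfold qnext.
apply PD_mult. apply PD_mult; apply PD_id.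
apply PD_plus. exact H. apply PD_mult. apply PD_const. exact H'.
Qed.

Lemma flat_lim (q q' : R -> R) : PolyD q q' ->
  forall eps, 0 < eps -> exists U, 1 <= U /\
    forall u, U <= u -> Rabs (q u) * u * exp (- u) < eps.
Proof.
intros Hq eps Heps.
destruct (PolyD_bound _ _ Hq) as [C [k [HC Hb]]].
set m := S (S k).
have Hm : (0 < m)%coq_nat by (unfold m; lia).
have HmR : 0 < INR m by apply lt_0_INR.
set K := (INR m) ^ m.
have HK : 0 < K by apply pow_lt.
exists (Rmax 1 (C * K / eps + 1)). split; [apply Rmax_l|].
intros u Hu.
have Hu1 : 1 <= u by eapply Rle_trans; [apply Rmax_l|exact Hu].
have Hu2 : C * K / eps + 1 <= u by eapply Rle_trans; [apply Rmax_r|exact Hu].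
have Hup : 0 < u by lra.
have E1 := exp_pow_lower u m (Rlt_le _ _ Hup) Hm.
have Hexp : 0 < exp u by apply exp_pos.
have Hb' := Hb u Hu1.
rewrite exp_Ropp.
(* Rabs (q u) * u / exp u <= C u^(k+1) / ((u/m)^m) = C K / u *)
have Hpow : (u / INR m) ^ m = u ^ m / K.
{ unfold K. rewrite Rpow_mult_distr pow_inv. unfold Rdiv. reflexivity. }
rewrite Hpow in E1.
have Hum : u ^ m = u ^ k * u * u by (unfold m; simpl; ring).
rewrite Hum in E1.
have Hukp : 0 < u ^ k by apply pow_lt.
have Hstep : Rabs (q u) * u * / exp u <= C * u ^ k * u * / (u ^ k * u * u / K).
{ apply Rmult_le_compat.
  - have := Rabs_pos (q u); nra.
  - apply Rlt_le, Rinv_0_lt_compat; exact Hexp.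
  - apply Rmult_le_compat_r; lra.
  - apply Rinv_le_contravar; [|exact E1].
    apply Rdiv_lt_0_compat; [|exact HK]. repeat apply Rmult_lt_0_compat; lra. }
eapply Rle_lt_trans; [exact Hstep|].
have -> : C * u ^ k * u * / (u ^ k * u * u / K) = C * K / u by field; lra.
have Hce : C * K / eps < u by lra.
apply (Rmult_lt_reg_r u); [lra|].
have -> : C * K / u * u = C * K by field; lra.
have : C * K < eps * u.
{ apply (Rmult_lt_reg_r (/ eps)). apply Rinv_0_lt_compat; lra.
  have -> : eps * u * / eps = u by field; lra. exact Hce. }
lra.
Qed.

Lemma hq_derive (q q' : R -> R) : PolyD q q' ->
  forall x, is_derive (hq q) x (hq (qnext q q') x).
Proof.
intros Hq x.
destruct (Rtotal_order x 0) as [Hx|[Hx|Hx]].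
-
  apply is_derive_ext_loc with (fun _ => 0).
  { exists (mkposreal (- x) ltac:(lra)). intros y Hy.
    unfold ball in Hy; simpl in Hy; unfold AbsRing_ball, abs, minus, plus, opp in Hy; simpl in Hy.
    unfold hq. destruct (Rlt_dec 0 y) as [h|h]; [|reflexivity].
    exfalso. apply Rabs_lt_between in Hy. lra. }
  replace (hq (qnext q q') x) with 0; [apply: is_derive_const|].
  unfold hq. destruct (Rlt_dec 0 x); [lra|reflexivity].
- subst x. replace (hq (qnext q q') 0) with 0; last first.
  { unfold hq. destruct (Rlt_dec 0 0); [lra|reflexivity]. }
  apply is_derive_Reals. intros eps Heps.
  destruct (flat_lim q q' Hq eps Heps) as [U [HU HUb]].
  exists (mkposreal (/ U) ltac:(apply Rinv_0_lt_compat; lra)).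
  intros h Hh0 Hh. simpl in Hh.
  unfold hq. rewrite Rplus_0_l.
  destruct (Rlt_dec 0 0) as [h0|h0]; [lra|].
  destruct (Rlt_dec 0 h) as [hp|hn].
  + rewrite Rabs_right in Hh; [|lra].
    have Hu : U <= / h.
    { rewrite -(Rinv_inv U). apply Rinv_le_contravar; [exact hp|lra]. }
    have := HUb (/ h) Hu.
    have -> : (q (/ h) * exp (- / h) - 0) / h - 0 = q (/ h) * / h * exp (- / h) by field; lra.
    rewrite !Rabs_mult (Rabs_right (/ h)); [|apply Rle_ge, Rlt_le, Rinv_0_lt_compat; lra].
    rewrite (Rabs_right (exp _)); [|apply Rle_ge, Rlt_le, exp_pos]. lra.
  + have -> : (0 - 0) / h - 0 = 0 by field.
    rewrite Rabs_R0; lra.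
-
  have Hloc : locally x (fun y => q (/ y) * exp (- / y) = hq q y).
  { exists (mkposreal x Hx). intros y Hy.
    unfold ball in Hy; simpl in Hy; unfold AbsRing_ball, abs, minus, plus, opp in Hy; simpl in Hy.
    apply Rabs_lt_between in Hy.
    unfold hq. destruct (Rlt_dec 0 y); [reflexivity|lra]. }
  apply (is_derive_ext_loc _ _ _ _ Hloc).
  replace (hq (qnext q q') x) with (qnext q q' (/ x) * exp (- / x)); last first.
  { unfold hq. destruct (Rlt_dec 0 x); [reflexivity|lra]. }
  have D1 : is_derive (fun y => / y) x (- 1 / x ^ 2).
  { apply (is_derive_inv (fun y => y)). apply: is_derive_id. lra. }
  have D2 : is_derive (fun y => q (/ y)) x (scal (- 1 / x ^ 2) (q' (/ x))).
  { apply (is_derive_comp q (fun y => / y)). apply PolyD_derive; exact Hq. exact D1. }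
  have D3 : is_derive (fun y => exp (- / y)) x (exp (- / x) * (/ x ^ 2)).
  { auto_derive. lra. field. lra. }
  have D := is_derive_mult _ _ _ _ _ D2 D3 Rmult_comm.
  have Hx0 : x <> 0 by lra.
  replace (qnext q q' (/ x) * exp (- / x)) with
    (plus (mult (scal (-1 / x ^ 2) (q' (/ x))) (exp (- / x)))
       (mult (q (/ x)) (exp (- / x) * / x ^ 2))).
  exact D.
  unfold scal, plus, mult; simpl; unfold mult; simpl. unfold qnext.
  field. exact Hx0.
Qed.

Definition Sm (g : R -> R) (y : R) : Prop := forall n, ex_derive_n g n y.
Definition LSm (g : R -> R) (x : R) : Prop := locally x (Sm g).
Definition SmG (g : R -> R) : Prop := forall n x, ex_derive_n g n x.

Lemma Derive_n_Derive (h : R -> R) (k : nat) (y : R) :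
  Derive_n (Derive h) k y = Derive_n h (S k) y.
Proof.
have E := Derive_n_comp h k 1 y.
rewrite Nat.add_1_r in E. rewrite -E. reflexivity.
Qed.

Lemma ex_derive_n_S (h : R -> R) (n : nat) (x : R) :
  ex_derive h x -> ex_derive_n (Derive h) n x -> ex_derive_n h (S n) x.
Proof.
intros H1 H2. destruct n as [|k]. exact H1.
simpl in H2 |- *.
eapply ex_derive_ext; [|exact H2]. intro t. apply Derive_n_Derive.
Qed.

Lemma ex_derive_n_S' (h : R -> R) (n : nat) (x : R) :
  ex_derive_n h (S n) x -> ex_derive_n (Derive h) n x.
Proof.
intros H. destruct n as [|k]. exact I.
simpl in H |- *.
eapply ex_derive_ext; [|exact H]. intro t. symmetry. apply Derive_n_Derive.
Qed.

Lemma Sm_Derive h x : Sm h x -> Sm (Derive h) x.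
Proof. intros H n. apply ex_derive_n_S'. apply H. Qed.

Lemma Sm_ex_derive h x : Sm h x -> ex_derive h x.
Proof. intros H. exact (H 1%nat). Qed.

Lemma hq_smooth : forall n q q', PolyD q q' -> forall x, ex_derive_n (hq q) n x.
Proof.
induction n as [|n IH]; intros q q' Hq x. exact I.
apply ex_derive_n_S.
- eexists. apply hq_derive. exact Hq.
- destruct (qnext_PolyD _ _ Hq) as [q2 Hq2].
  apply ex_derive_n_ext with (hq (qnext q q')).
  + intro t. symmetry. apply is_derive_unique. apply hq_derive. exact Hq.
  + apply (IH _ _ Hq2).
Qed.

Definition h0 : R -> R := hq (fun _ => 1).

Lemma h0_smooth : SmG h0.
Proof. intros n x. apply (hq_smooth n _ _ (PD_const 1)). Qed.

Lemma h0_pos x : 0 < x -> 0 < h0 x.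
Proof. intros H. unfold h0, hq. destruct (Rlt_dec 0 x); [|lra]. rewrite Rmult_1_l. apply exp_pos. Qed.

Lemma h0_zero x : x <= 0 -> h0 x = 0.
Proof. intros H. unfold h0, hq. destruct (Rlt_dec 0 x); [lra|reflexivity]. Qed.

Lemma h0_nonneg x : 0 <= h0 x.
Proof. destruct (Rlt_dec 0 x). apply Rlt_le, h0_pos; lra. rewrite h0_zero; lra. Qed.

Lemma SmG_LSm g x : SmG g -> LSm g x.
Proof. intros H. unfold LSm. apply filter_forall. intros y n. apply H. Qed.

Lemma LSm_Sm g x : LSm g x -> Sm g x.
Proof. intros H. apply locally_singleton in H. exact H. Qed.

Lemma LSm_loc g x : LSm g x -> locally x (LSm g).
Proof. intros H. apply locally_locally. exact H. Qed.

Lemma LSm_ext f g x : locally x (fun y => f y = g y) -> LSm f x -> LSm g x.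
Proof.
intros He Hf.
have He' := locally_locally _ _ He.
unfold LSm. try (unfold LSm at 1); pose proof (filter_and _ _ He' Hf) as HH; revert HH. apply filter_imp.
intros y [Hy1 Hy2] n. eapply ex_derive_n_ext_loc; [exact Hy1|apply Hy2].
Qed.

Lemma LSm_locks (g : R -> R) x n : LSm g x ->
  locally x (fun y => forall k, (k <= n)%coq_nat -> ex_derive_n g k y).
Proof. unfold LSm. apply filter_imp. intros y Hy k _. apply Hy. Qed.

Lemma LSm_plus f g x : LSm f x -> LSm g x -> LSm (fun t => f t + g t) x.
Proof.
intros Hf Hg.
try (unfold LSm at 1); pose proof (filter_and _ _ (LSm_loc _ _ Hf) (LSm_loc _ _ Hg)) as HH; revert HH. apply filter_imp.
intros y [Hy1 Hy2] n. apply ex_derive_n_plus; apply LSm_locks; assumption.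
Qed.

Lemma LSm_const a x : LSm (fun _ => a) x.
Proof. unfold LSm. apply filter_forall. intros y n. apply ex_derive_n_const. Qed.

Lemma LSm_id x : LSm (fun t => t) x.
Proof.
unfold LSm. apply filter_forall. intros y n.
apply ex_derive_n_ext with (fun t => t ^ 1). intro t; simpl; ring.
apply ex_derive_n_pow.
Qed.

Lemma LSm_scal a f x : LSm f x -> LSm (fun t => a * f t) x.
Proof. unfold LSm. apply filter_imp. intros y Hy n. apply ex_derive_n_scal_l. apply Hy. Qed.

Lemma LSm_Derive f x : LSm f x -> LSm (Derive f) x.
Proof. unfold LSm. apply filter_imp. intros y Hy. apply Sm_Derive. exact Hy. Qed.

Lemma LSm_ex_derive f x : LSm f x -> ex_derive f x.
Proof. intros H. apply Sm_ex_derive. apply LSm_Sm. exact H. Qed.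

Lemma LSm_cont f x : LSm f x -> continuous f x.
Proof. intros H. apply: ex_derive_continuous. apply LSm_ex_derive. exact H. Qed.

Lemma LSm_mult_aux : forall n f g x, LSm f x -> LSm g x ->
  forall k, (k <= n)%coq_nat -> ex_derive_n (fun t => f t * g t) k x.
Proof.
induction n as [|n IH]; intros f g x Hf Hg k Hk.
- have -> : k = 0%nat by lia. exact I.
- destruct (Nat.le_gt_cases k n) as [Hkn|Hkn].
  + apply IH; assumption.
  + have -> : k = S n by lia.
    apply ex_derive_n_S.
    * apply: ex_derive_mult; apply LSm_ex_derive; assumption.
    * have Hloc : locally x (fun y => Derive f y * g y + f y * Derive g y
                                = Derive (fun t => f t * g t) y).
      { try (unfold LSm at 1); pose proof (filter_and _ _ Hf Hg) as HH; revert HH. apply filter_imp. intros y [H1 H2].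
        symmetry. apply Derive_mult; apply Sm_ex_derive; assumption. }
      eapply ex_derive_n_ext_loc; [exact Hloc|].
      apply ex_derive_n_plus.
      -- try (unfold LSm at 1); pose proof (filter_and _ _ (LSm_loc _ _ Hf) (LSm_loc _ _ Hg)) as HH; revert HH. apply filter_imp.
         intros y [H1 H2] j Hj. apply IH; [apply LSm_Derive; exact H1|exact H2|exact Hj].
      -- try (unfold LSm at 1); pose proof (filter_and _ _ (LSm_loc _ _ Hf) (LSm_loc _ _ Hg)) as HH; revert HH. apply filter_imp.
         intros y [H1 H2] j Hj. apply IH; [exact H1|apply LSm_Derive; exact H2|exact Hj].
Qed.

Lemma LSm_mult f g x : LSm f x -> LSm g x -> LSm (fun t => f t * g t) x.
Proof.
intros Hf Hg.
try (unfold LSm at 1); pose proof (filter_and _ _ (LSm_loc _ _ Hf) (LSm_loc _ _ Hg)) as HH; revert HH. apply filter_imp.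
intros y [H1 H2] n. apply (LSm_mult_aux n f g y H1 H2 n). lia.
Qed.

Lemma SmG_affine f a b : SmG f -> SmG (fun t => f (a * t + b)).
Proof.
intros Hf n x.
apply (ex_derive_n_comp_scal (fun y => f (y + b)) a n x).
apply filter_forall. intros y k _. apply ex_derive_n_comp_trans. apply Hf.
Qed.

Lemma SmG_ext f g : (forall t, f t = g t) -> SmG f -> SmG g.
Proof. intros E H n x. eapply ex_derive_n_ext; [exact E|apply H]. Qed.

Lemma SmG_of_LSm f : (forall x, LSm f x) -> SmG f.
Proof. intros H n x. apply LSm_Sm. apply H. Qed.

Lemma SmG_cont f x : SmG f -> continuous f x.
Proof. intros H. apply LSm_cont, SmG_LSm, H. Qed.

Lemma SmG_ex_RInt f a b : SmG f -> ex_RInt f a b.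
Proof. intros H. apply: (@ex_RInt_continuous R_CompleteNormedModule). intros z _. apply SmG_cont, H. Qed.

Lemma SmG_mult f g : SmG f -> SmG g -> SmG (fun t => f t * g t).
Proof. intros Hf Hg. apply SmG_of_LSm. intro x. apply LSm_mult; apply SmG_LSm; assumption. Qed.

Lemma SmG_scal a f : SmG f -> SmG (fun t => a * f t).
Proof. intros Hf. apply SmG_of_LSm. intro x. apply LSm_scal; apply SmG_LSm; assumption. Qed.

Definition psi (x : R) : R := h0 (1 + x) * h0 (1 - x).

Lemma psi_smooth : SmG psi.
Proof.
apply SmG_mult.
- apply SmG_ext with (fun t => h0 (1 * t + 1)). intro t; f_equal; ring.
  apply SmG_affine, h0_smooth.
- apply SmG_ext with (fun t => h0 ((-1) * t + 1)). intro t; f_equal; ring.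
  apply SmG_affine, h0_smooth.
Qed.

Lemma psi_nonneg x : 0 <= psi x.
Proof. unfold psi. apply Rmult_le_pos; apply h0_nonneg. Qed.

Lemma psi_pos x : -1 < x < 1 -> 0 < psi x.
Proof. intros H. unfold psi. apply Rmult_lt_0_compat; apply h0_pos; lra. Qed.

Lemma psi_zero x : 1 <= Rabs x -> psi x = 0.
Proof.
intros H. unfold psi. destruct (Rle_dec x 0).
- rewrite Rabs_left1 in H; [|lra]. rewrite (h0_zero (1 + x)); [ring|lra].
- rewrite Rabs_right in H; [|lra]. rewrite (h0_zero (1 - x)); [ring|lra].
Qed.

Definition Cpsi : R := RInt psi (-1) 1.

Lemma Cpsi_pos : 0 < Cpsi.
Proof.
apply RInt_gt_0. lra. intros; apply psi_pos; lra.
intros; apply SmG_cont, psi_smooth.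
Qed.

Definition Phi (x : R) : R := RInt psi (-1) x / Cpsi.

Lemma Phi_derive x : is_derive Phi x (psi x / Cpsi).
Proof.
unfold Phi.
apply (is_derive_ext (fun y => scal (/ Cpsi) (RInt psi (-1) y))).
{ intro t. unfold scal; simpl; unfold mult; simpl. unfold Rdiv. ring. }
replace (psi x / Cpsi) with (scal (/ Cpsi) (psi x)).
2:{ unfold scal; simpl; unfold mult; simpl. unfold Rdiv. ring. }
apply is_derive_scal.
apply (is_derive_RInt psi (RInt psi (-1)) (-1) x).
- apply filter_forall. intros y. apply: (@RInt_correct R_CompleteNormedModule). apply SmG_ex_RInt, psi_smooth.
- apply SmG_cont, psi_smooth.
Qed.

Lemma Phi_smooth : SmG Phi.
Proof.
intros n x. destruct n as [|n]. exact I.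
apply ex_derive_n_S.
- eexists; apply Phi_derive.
- apply ex_derive_n_ext with (fun t => / Cpsi * psi t).
  + intro t. symmetry. rewrite (is_derive_unique _ _ _ (Phi_derive t)). unfold Rdiv; ring.
  + apply SmG_scal, psi_smooth.
Qed.

Lemma Phi_low x : x <= -1 -> Phi x = 0.
Proof.
intros H. unfold Phi.
rewrite (RInt_ext psi (fun _ => 0)).
- rewrite RInt_const. unfold scal; simpl; unfold mult; simpl. unfold Rdiv. ring.
- intros t Ht. apply psi_zero.
  rewrite Rmin_right in Ht; [|lra]. rewrite Rmax_left in Ht; [|lra].
  rewrite Rabs_left; lra.
Qed.

Lemma Phi_high x : 1 <= x -> Phi x = 1.
Proof.
intros H. unfold Phi.
rewrite -(RInt_Chasles psi (-1) 1 x); try apply SmG_ex_RInt, psi_smooth.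
rewrite (RInt_ext psi (fun _ => 0) 1 x).
- rewrite RInt_const. unfold scal, plus; simpl; unfold mult, plus; simpl.
  rewrite Rmult_0_r Rplus_0_r. fold Cpsi. field. apply Rgt_not_eq, Cpsi_pos.
- intros t Ht. apply psi_zero.
  rewrite Rmin_left in Ht; [|lra]. rewrite Rmax_right in Ht; [|lra].
  rewrite Rabs_right; lra.
Qed.

Lemma Phi_range x : 0 <= Phi x <= 1.
Proof.
destruct (Rle_dec x (-1)). rewrite Phi_low; lra.
destruct (Rle_dec 1 x). rewrite Phi_high; lra.
have HC := Cpsi_pos.
have H1 : 0 <= RInt psi (-1) x.
{ apply RInt_ge_0. lra. apply SmG_ex_RInt, psi_smooth. intros; apply psi_nonneg. }
have H2 : 0 <= RInt psi x 1.
{ apply RInt_ge_0. lra. apply SmG_ex_RInt, psi_smooth. intros; apply psi_nonneg. }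
have H3 : RInt psi (-1) x + RInt psi x 1 = Cpsi.
{ unfold Cpsi. rewrite -(RInt_Chasles psi (-1) x 1); try apply SmG_ex_RInt, psi_smooth. reflexivity. }
unfold Phi. split.
- apply Rdiv_le_0_compat; lra.
- apply (Rmult_le_reg_r Cpsi); [lra|]. unfold Rdiv. rewrite Rmult_assoc Rinv_l; lra.
Qed.

Definition pl (x : R) : R := Phi (3 - 4 * x) * Phi (3 + 4 * x).

Lemma pl_smooth : SmG pl.
Proof.
apply SmG_mult.
- apply SmG_ext with (fun t => Phi ((-4) * t + 3)). intro t; f_equal; ring.
  apply SmG_affine, Phi_smooth.
- apply SmG_ext with (fun t => Phi (4 * t + 3)). intro t; f_equal; ring.
  apply SmG_affine, Phi_smooth.
Qed.

Lemma pl_range x : 0 <= pl x <= 1.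
Proof.
unfold pl. have := Phi_range (3 - 4 * x); have := Phi_range (3 + 4 * x). intros. nra.
Qed.

Lemma pl_one x : Rabs x <= 1/2 -> pl x = 1.
Proof.
intros H. apply Rabs_le_between in H. unfold pl.
rewrite Phi_high; [|lra]. rewrite Phi_high; [|lra]. ring.
Qed.

Lemma pl_zero x : 1 <= Rabs x -> pl x = 0.
Proof.
intros H. unfold pl. destruct (Rle_dec x 0).
- rewrite Rabs_left1 in H; [|lra]. rewrite (Phi_low (3 + 4 * x)); [ring|lra].
- rewrite Rabs_right in H; [|lra]. rewrite (Phi_low (3 - 4 * x)); [ring|lra].
Qed.

Lemma loc_of (x : R) (P : R -> Prop) (d : R) : 0 < d ->
  (forall y, Rabs (y - x) < d -> P y) -> locally x P.
Proof.
intros Hd H. exists (mkposreal d Hd). intros y Hy. apply H.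
exact Hy.
Qed.

Lemma loc_to (x : R) (P : R -> Prop) : locally x P ->
  exists d, 0 < d /\ forall y, Rabs (y - x) < d -> P y.
Proof.
intros [e He]. exists e. split. apply cond_pos. intros y Hy. apply He. exact Hy.
Qed.

Lemma cont_loc (f g : R -> R) x : locally x (fun y => f y = g y) -> continuous g x -> continuous f x.
Proof. intros H1 H2. apply (continuous_ext_loc f g x). move: H1; apply filter_imp; intros; symmetry; auto. exact H2. Qed.

Lemma cont_Rmax0 (g : R -> R) x : continuous g x -> continuous (fun y => Rmax 0 (g y)) x.
Proof.
intros H.
apply (continuous_ext (fun y => (g y + Rabs (g y)) / 2)).
{ intro y. unfold Rmax. destruct (Rle_dec 0 (g y)).
  rewrite Rabs_right; lra. rewrite Rabs_left; lra. }
apply (continuous_ext (fun y => scal (/2) (plus (g y) (Rabs (g y))))).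
{ intro y. unfold scal, plus; simpl; unfold mult, plus; simpl. unfold Rdiv. ring. }
apply: continuous_scal_r. apply: continuous_plus. exact H. apply continuous_Rabs_comp. exact H.
Qed.

Lemma RInt_pos_point (g : R -> R) a b t0 : a < t0 < b ->
  (forall x, a <= x <= b -> continuous g x) ->
  (forall x, a < x < b -> 0 <= g x) -> 0 < g t0 -> 0 < RInt g a b.
Proof.
intros Ht0 Hc Hnn Hp.
have Hct := Hc t0 ltac:(lra).
have Hloc : locally t0 (fun y => g t0 / 2 < g y).
{ have := Hct (fun z => g t0 / 2 < z).
  intros HH. apply HH.
  apply (loc_of (g t0) _ (g t0 / 2)). lra. intros y Hy. apply Rabs_lt_between in Hy. lra. }
destruct (loc_to _ _ Hloc) as [d [Hd Hdy]].
set u := Rmax a (t0 - d / 2). set v := Rmin b (t0 + d / 2).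
have Hu1 : a <= u by apply Rmax_l.
have Hu2 : u < t0 by (unfold u; apply Rmax_lub_lt; lra).
have Hv1 : v <= b by apply Rmin_l.
have Hv2 : t0 < v by (unfold v; apply Rmin_glb_lt; lra).
have Hu3 : t0 - d / 2 <= u by apply Rmax_r.
have Hv3 : v <= t0 + d / 2 by apply Rmin_r.
have Ex : forall p q, a <= p -> p <= q -> q <= b -> ex_RInt g p q.
{ intros p q Hp1 Hpq Hq1. apply: (@ex_RInt_continuous R_CompleteNormedModule).
  intros z Hz. apply Hc. rewrite Rmin_left in Hz; [|lra]. rewrite Rmax_right in Hz; lra. }
rewrite -(RInt_Chasles g a u b); [|apply Ex; lra|apply Ex; lra].
rewrite -(RInt_Chasles g u v b); [|apply Ex; lra|apply Ex; lra].
unfold plus; simpl.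
have I1 : 0 <= RInt g a u.
{ apply RInt_ge_0. lra. apply Ex; lra. intros; apply Hnn; lra. }
have I3 : 0 <= RInt g v b.
{ apply RInt_ge_0. lra. apply Ex; lra. intros; apply Hnn; lra. }
have I2 : 0 < RInt g u v.
{ apply RInt_gt_0. lra.
  - intros x Hx. have := Hdy x. intros HH. have : g t0 / 2 < g x.
    apply HH. apply Rabs_lt_between. lra. lra.
  - intros x Hx; apply Hc; lra. }
lra.
Qed.

Definition bump (r p t : R) : R := pl ((t - p) / r).

Lemma bump_smooth r p : SmG (bump r p).
Proof.
apply SmG_ext with (fun t => pl (/ r * t + (- p / r))).
{ intro t. unfold bump. f_equal. unfold Rdiv. ring. }
apply SmG_affine, pl_smooth.
Qed.

Lemma bump_range r p t : 0 <= bump r p t <= 1.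
Proof. apply pl_range. Qed.

Lemma bump_one r p t : 0 < r -> Rabs (t - p) <= r / 2 -> bump r p t = 1.
Proof.
intros Hr H. apply pl_one. unfold Rdiv. rewrite Rabs_mult (Rabs_right (/ r)).
2: apply Rle_ge, Rlt_le, Rinv_0_lt_compat; lra.
apply (Rmult_le_reg_r r); [lra|]. rewrite Rmult_assoc Rinv_l; lra.
Qed.

Lemma bump_zero r p t : 0 < r -> r <= Rabs (t - p) -> bump r p t = 0.
Proof.
intros Hr H. apply pl_zero. unfold Rdiv. rewrite Rabs_mult (Rabs_right (/ r)).
2: apply Rle_ge, Rlt_le, Rinv_0_lt_compat; lra.
apply (Rmult_le_reg_r r); [lra|]. rewrite Rmult_assoc Rinv_l; lra.
Qed.

Definition sumB (r : R) (cs : seq (R * (R -> R))) (t : R) : R :=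
  foldr (fun pg acc => bump r pg.1 t * pg.2 t + acc) 0 cs.

Definition wB (r : R) (cs : seq (R * (R -> R))) (t : R) : R :=
  foldr (fun pg acc => (1 - bump r pg.1 t) * acc) 1 cs.

Definition fillf (Km Kp : R) (s : R -> R) (t : R) : R :=
  - (if Rlt_dec (t * s t) 0 then Km else Kp) * s t.

Definition gE (r : R) (cs : seq (R * (R -> R))) (fl : R -> R) (t : R) : R :=
  sumB r cs t + wB r cs t * fl t.

Lemma wB_range r cs t : 0 <= wB r cs t <= 1.
Proof.
induction cs as [|i cs IH]; simpl. lra.
have := bump_range r i.1 t. nra.
Qed.

Lemma LSm_eq f g x : (forall t, f t = g t) -> LSm f x -> LSm g x.
Proof. intros E. apply LSm_ext. apply filter_forall. exact E. Qed.

Lemma wB_smooth r cs x : LSm (wB r cs) x.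
Proof.
induction cs as [|i cs IH] in x |- *.
- apply (LSm_eq (fun _ => 1)). intro; reflexivity. apply LSm_const.
- apply (LSm_eq (fun t => (1 + -1 * bump r i.1 t) * wB r cs t)).
  { intro t. simpl. ring. }
  apply LSm_mult; [|apply IH].
  apply (LSm_plus (fun _ => 1) (fun t => -1 * bump r i.1 t)).
  apply LSm_const. apply LSm_scal, SmG_LSm, bump_smooth.
Qed.

Lemma term_smooth r p G y : 0 < r -> (forall z, Rabs (z - p) < 2 * r -> LSm G z) ->
  LSm (fun t => bump r p t * G t) y.
Proof.
intros Hr HG.
destruct (Rlt_dec (Rabs (y - p)) (2 * r)) as [Hy|Hy].
- apply LSm_mult. apply SmG_LSm, bump_smooth. apply HG, Hy.
- apply (LSm_ext (fun _ => 0)); [|apply LSm_const].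
  apply (loc_of y _ r Hr). intros z Hz.
  rewrite bump_zero; [ring|lra|].
  have := Rabs_triang_inv (y - p) (y - z).
  have -> : y - p - (y - z) = z - p by ring.
  rewrite Rabs_minus_sym in Hz. lra.
Qed.

Lemma sumB_smooth r cs y : 0 < r ->
  (forall i, List.In i cs -> forall z, Rabs (z - i.1) < 2 * r -> LSm i.2 z) ->
  LSm (sumB r cs) y.
Proof.
intros Hr. induction cs as [|i cs IH]; intros H.
- apply (LSm_eq (fun _ => 0)). intro; reflexivity. apply LSm_const.
- apply (LSm_eq (fun t => bump r i.1 t * i.2 t + sumB r cs t)). intro; reflexivity.
  apply LSm_plus.
  + apply term_smooth; [exact Hr|]. apply H. left; reflexivity.
  + apply IH. intros j Hj. apply H. right; exact Hj.
Qed.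

Lemma sumB_allzero r cs t : (forall k, List.In k cs -> bump r k.1 t = 0) -> sumB r cs t = 0.
Proof.
induction cs as [|j cs IH]; simpl; intros H. reflexivity.
rewrite H; [|left; reflexivity]. rewrite IH. ring. intros k Hk; apply H; right; exact Hk.
Qed.

Lemma sumB_center r cs i t : List.NoDup (map fst cs) -> List.In i cs ->
  (forall j, List.In j cs -> j.1 <> i.1 -> bump r j.1 t = 0) ->
  bump r i.1 t = 1 -> sumB r cs t = i.2 t.
Proof.
induction cs as [|j cs IH]; intros Hnd Hi Hz H1. destruct Hi.
simpl in Hnd. inversion Hnd as [|x l Hnin Hnd' E]. subst.
simpl. destruct (Req_dec j.1 i.1) as [E|E].
- destruct Hi as [Hi|Hi].
  + subst j. rewrite H1.
    have -> : sumB r cs t = 0.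
    { apply sumB_allzero. intros k Hk. apply Hz. right; exact Hk.
      intros Ek. apply Hnin. rewrite -Ek. apply List.in_map. exact Hk. }
    ring.
  + exfalso. apply Hnin. rewrite E. apply List.in_map. exact Hi.
- rewrite Hz; [|left; reflexivity|exact E].
  destruct Hi as [Hi|Hi]. subst j; congruence.
  rewrite IH; auto. ring. intros k Hk. apply Hz. right; exact Hk.
Qed.

Lemma wB_center r cs i t : List.In i cs -> bump r i.1 t = 1 -> wB r cs t = 0.
Proof.
induction cs as [|j cs IH]; intros Hi H1. destruct Hi.
simpl. destruct Hi as [Hi|Hi].
- subst j. rewrite H1. ring.
- rewrite IH; auto. ring.
Qed.

Lemma wB_zero_inv r cs t : wB r cs t = 0 -> exists i, List.In i cs /\ bump r i.1 t = 1.
Proof.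
induction cs as [|j cs IH]; simpl; intros H. lra.
apply Rmult_integral in H. destruct H as [H|H].
- exists j. split. left; reflexivity. lra.
- destruct (IH H) as [i [Hi Hb]]. exists i. split. right; exact Hi. exact Hb.
Qed.

Lemma wB_far r cs t : (forall i, List.In i cs -> bump r i.1 t = 0) -> wB r cs t = 1.
Proof.
induction cs as [|j cs IH]; simpl; intros H. reflexivity.
rewrite H; [|left; reflexivity]. rewrite IH. ring. intros i Hi; apply H; right; exact Hi.
Qed.

Lemma sumB_sign r cs t (st : R) :
  (forall i, List.In i cs -> bump r i.1 t * i.2 t * st <= 0) ->
  sumB r cs t * st <= 0.
Proof.
induction cs as [|j cs IH]; simpl; intros H. lra.
have := H j (or_introl erefl).
have := IH (fun i Hi => H i (or_intror Hi)). intros. nra.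
Qed.

Lemma sumB_sign_strict r cs t (st : R) :
  (forall i, List.In i cs -> bump r i.1 t * i.2 t * st <= 0) ->
  (exists i, List.In i cs /\ bump r i.1 t * i.2 t * st < 0) ->
  sumB r cs t * st < 0.
Proof.
induction cs as [|j cs IH]; simpl; intros H [i [Hi Hlt]]. destruct Hi.
destruct Hi as [Hi|Hi].
- subst j. have := sumB_sign r cs t st (fun k Hk => H k (or_intror Hk)). nra.
- have := H j (or_introl erefl).
  have := IH (fun k Hk => H k (or_intror Hk)) (ex_intro _ i (conj Hi Hlt)). nra.
Qed.

Definition EdgeOK (a b r : R) (cs : seq (R * (R -> R))) (s : R -> R) : Prop :=
  a < b /\ 0 < r /\
  (exists Ga, List.In (a, Ga) cs) /\ (exists Gb, List.In (b, Gb) cs) /\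
  (forall i j, List.In i cs -> List.In j cs -> i.1 <> j.1 -> 4 * r <= Rabs (i.1 - j.1)) /\
  List.NoDup (map fst cs) /\
  (forall i, List.In i cs -> a <= i.1 <= b) /\
  (forall i, List.In i cs -> forall y, Rabs (y - i.1) < 2 * r -> LSm i.2 y) /\
  (forall i, List.In i cs -> forall t, a < t < b -> Rabs (t - i.1) < r -> t <> i.1 ->
       s t <> 0 -> i.2 t * s t < 0) /\
  (forall t, a < t < b -> (forall i, List.In i cs -> i.1 <> t) ->
      s t <> 0 /\ t <> 0 /\ locally t (fun y => s y = s t)).

Lemma edge_center a b r cs s Km Kp i t : EdgeOK a b r cs s -> List.In i cs ->
  Rabs (t - i.1) < r / 2 -> gE r cs (fillf Km Kp s) t = i.2 t.
Proof.
intros [Hab [Hr [_ [_ [Hsep [Hnd _]]]]]] Hi Ht.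
have B1 : bump r i.1 t = 1 by apply bump_one; lra.
unfold gE. rewrite (wB_center r cs i t Hi B1) (sumB_center r cs i t Hnd Hi); [ring| |exact B1].
intros j Hj Hne. apply bump_zero; [exact Hr|].
have := Hsep j i Hj Hi Hne.
have := Rabs_triang_inv (j.1 - i.1) (t - i.1).
have -> : j.1 - i.1 - (t - i.1) = - (t - j.1) by ring.
rewrite Rabs_Ropp. lra.
Qed.

Lemma edge_near_center a b r cs s i t : EdgeOK a b r cs s -> List.In i cs ->
  Rabs (t - i.1) < r / 2 -> wB r cs t = 0.
Proof.
intros [Hab [Hr _]] Hi Ht. apply (wB_center r cs i t Hi). apply bump_one; lra.
Qed.

Lemma fill_locconst Km Kp (s : R -> R) t : t <> 0 -> s t <> 0 ->
  locally t (fun y => s y = s t) -> locally t (fun y => fillf Km Kp s y = fillf Km Kp s t).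
Proof.
intros Ht Hs Hl.
have Hl2 : locally t (fun y => 0 < y * t).
{ apply (loc_of t _ (Rabs t)). apply Rabs_pos_lt, Ht.
  intros y Hy. apply Rabs_lt_between in Hy.
  destruct (Rle_dec 0 t). rewrite Rabs_right in Hy; [|lra]. nra.
  rewrite Rabs_left in Hy; [|lra]. nra. }
pose proof (filter_and _ _ Hl Hl2) as HH. revert HH. apply filter_imp.
intros y [E Hy]. unfold fillf. rewrite E.
destruct (Rlt_dec (y * s t) 0) as [h1|h1]; destruct (Rlt_dec (t * s t) 0) as [h2|h2];
  try reflexivity; exfalso.
- apply h2. have : 0 < y * t * (s t * s t) by (apply Rmult_lt_0_compat; [lra|nra]). nra.
- apply h1. have : 0 < y * t * (s t * s t) by (apply Rmult_lt_0_compat; [lra|nra]). nra.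
Qed.

Lemma edge_smooth a b r cs s Km Kp t : EdgeOK a b r cs s -> a < t < b ->
  LSm (gE r cs (fillf Km Kp s)) t.
Proof.
intros HE Ht. have HE' := HE.
destruct HE' as [Hab [Hr [_ [_ [Hsep [Hnd [Hrg [Hsm [Hsg Hloc]]]]]]]]].
unfold gE. apply (LSm_plus (sumB r cs) (fun y => wB r cs y * fillf Km Kp s y)).
- apply sumB_smooth; assumption.
- destruct (classic (exists i, List.In i cs /\ i.1 = t)) as [[i [Hi Ei]]|Hno].
  + apply (LSm_ext (fun _ => 0)); [|apply LSm_const].
    apply (loc_of t _ (r / 2)). lra. intros y Hy.
    rewrite (edge_near_center a b r cs s i y HE Hi). ring. rewrite Ei; exact Hy.
  + have Hne : forall i, List.In i cs -> i.1 <> t.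
    { intros i Hi Ei. apply Hno. exists i. split; assumption. }
    destruct (Hloc t Ht Hne) as [Hs0 [Ht0 Hl]].
    apply (LSm_ext (fun y => wB r cs y * fillf Km Kp s t)).
    * have := fill_locconst Km Kp s t Ht0 Hs0 Hl. apply filter_imp. intros y E. rewrite E. reflexivity.
    * apply LSm_mult. apply wB_smooth. apply LSm_const.
Qed.

Lemma edge_sign a b r cs s Km Kp t : EdgeOK a b r cs s -> 0 < Km -> 0 < Kp -> a < t < b ->
  (forall i, List.In i cs -> i.1 <> t) -> gE r cs (fillf Km Kp s) t * s t < 0.
Proof.
intros HE HKm HKp Ht Hne. have HE' := HE.
destruct HE' as [Hab [Hr [_ [_ [Hsep [Hnd [Hrg [Hsm [Hsg Hloc]]]]]]]]].
destruct (Hloc t Ht Hne) as [Hs0 [Ht0 _]].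
have Hterm : forall i, List.In i cs -> bump r i.1 t * i.2 t * s t <= 0.
{ intros i Hi. destruct (Rlt_dec (Rabs (t - i.1)) r) as [h|h].
  - have h1 := Hsg i Hi t Ht h (fun E => Hne i Hi (esym E)) Hs0.
    have h2 := bump_range r i.1 t.
    have := Rmult_le_compat_l (bump r i.1 t) _ 0 (proj1 h2) (Rlt_le _ _ h1).
    rewrite Rmult_assoc. lra.
  - rewrite bump_zero; [lra|lra|lra]. }
have Hfill : fillf Km Kp s t * s t < 0.
{ unfold fillf. have hs2 : 0 < s t * s t.
  { have := Rsqr_pos_lt _ Hs0. unfold Rsqr. auto. }
  destruct (Rlt_dec (t * s t) 0).
  - have := Rmult_lt_0_compat _ _ HKm hs2. intros; simpl; nra.
  - have := Rmult_lt_0_compat _ _ HKp hs2. intros; simpl; nra. }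
have Hw := wB_range r cs t.
unfold gE.
destruct (Req_dec (wB r cs t) 0) as [Hw0|Hw0].
- destruct (wB_zero_inv r cs t Hw0) as [i [Hi Hb]].
  have Hst : sumB r cs t * s t < 0.
  { apply sumB_sign_strict; [exact Hterm|]. exists i. split; [exact Hi|].
    rewrite Hb. rewrite Rmult_1_l.
    have Hlt : Rabs (t - i.1) < r.
    { destruct (Rlt_dec (Rabs (t - i.1)) r) as [h|h]; [exact h|].
      rewrite bump_zero in Hb; lra. }
    apply (Hsg i Hi t Ht Hlt (fun E => Hne i Hi (esym E)) Hs0). }
  rewrite Hw0. lra.
- have := sumB_sign r cs t (s t) Hterm.
  have : 0 < wB r cs t by lra.
  intros. nra.
Qed.

Definition AE r cs (a b : R) := RInt (fun t => t * sumB r cs t) a b.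
Definition PNE r cs (s : R -> R) (sg a b : R) :=
  RInt (fun t => wB r cs t * Rmax 0 (sg * (t * s t))) a b.

Lemma edge_cont a b r cs s sg z : EdgeOK a b r cs s -> a <= z <= b ->
  continuous (fun t => wB r cs t * Rmax 0 (sg * (t * s t))) z.
Proof.
intros HE Hz. have HE' := HE.
destruct HE' as [Hab [Hr [[Ga Ha] [[Gb Hb] [Hsep [Hnd [Hrg [Hsm [Hsg Hloc]]]]]]]]].
destruct (classic (exists i, List.In i cs /\ i.1 = z)) as [[i [Hi Ei]]|Hno].
- apply (cont_loc _ (fun _ => 0)); [|apply continuous_const].
  apply (loc_of z _ (r / 2)). lra. intros y Hy.
  rewrite (edge_near_center a b r cs s i y HE Hi). ring. rewrite Ei; exact Hy.
- have Hne : forall i, List.In i cs -> i.1 <> z.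
  { intros i Hi Ei. apply Hno. exists i. split; assumption. }
  have Hz' : a < z < b.
  { split.
    - destruct (Req_dec a z) as [E|E]; [|lra]. exfalso. apply (Hne _ Ha). exact E.
    - destruct (Req_dec b z) as [E|E]; [|lra]. exfalso. apply (Hne _ Hb). exact E. }
  destruct (Hloc z Hz' Hne) as [Hs0 [Hz0 Hl]].
  apply (cont_loc _ (fun t => wB r cs t * Rmax 0 (sg * (t * s z)))).
  + move: Hl. apply filter_imp. intros y E. rewrite E. reflexivity.
  + apply (continuous_mult (fun t => wB r cs t) (fun t => Rmax 0 (sg * (t * s z)))).
    * apply LSm_cont, wB_smooth.
    * apply cont_Rmax0. apply LSm_cont.
      apply (LSm_eq (fun t => sg * (s z * t))). intro; ring.
      apply LSm_scal, LSm_scal, LSm_id.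
Qed.

Lemma sumB_cont r cs z : 0 < r ->
  (forall i, List.In i cs -> forall y, Rabs (y - i.1) < 2 * r -> LSm i.2 y) ->
  continuous (fun t => t * sumB r cs t) z.
Proof.
intros Hr Hsm. apply LSm_cont. apply LSm_mult. apply LSm_id. apply sumB_smooth; assumption.
Qed.

Lemma edge_integral a b r cs s Km Kp : EdgeOK a b r cs s ->
  RInt (fun t => t * gE r cs (fillf Km Kp s) t) a b =
  AE r cs a b + Km * PNE r cs s (-1) a b - Kp * PNE r cs s 1 a b.
Proof.
intros HE. have HE' := HE.
destruct HE' as [Hab [Hr [_ [_ [Hsep [Hnd [Hrg [Hsm [Hsg Hloc]]]]]]]]].
set f1 := fun t => t * sumB r cs t.
set f2 := fun t => wB r cs t * Rmax 0 (-1 * (t * s t)).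
set f3 := fun t => wB r cs t * Rmax 0 (1 * (t * s t)).
have E1 : ex_RInt f1 a b.
{ apply: (@ex_RInt_continuous R_CompleteNormedModule). intros z _. apply sumB_cont; assumption. }
have E2 : ex_RInt f2 a b.
{ apply: (@ex_RInt_continuous R_CompleteNormedModule). intros z Hz.
  rewrite Rmin_left in Hz; [|lra]. rewrite Rmax_right in Hz; [|lra].
  apply (edge_cont a b r cs s (-1) z HE Hz). }
have E3 : ex_RInt f3 a b.
{ apply: (@ex_RInt_continuous R_CompleteNormedModule). intros z Hz.
  rewrite Rmin_left in Hz; [|lra]. rewrite Rmax_right in Hz; [|lra].
  apply (edge_cont a b r cs s 1 z HE Hz). }
rewrite (RInt_ext _ (fun t => plus (f1 t) (plus (scal Km (f2 t)) (scal (- Kp) (f3 t))))).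
2:{ intros t _. unfold f1, f2, f3, gE, fillf, plus, scal; simpl; unfold plus, mult; simpl.
    destruct (Rlt_dec (t * s t) 0) as [h|h]; simpl.
    - rewrite (Rmax_right 0 (-1 * (t * s t))); [|lra].
      rewrite (Rmax_left 0 (1 * (t * s t))); [|lra]. ring.
    - rewrite (Rmax_left 0 (-1 * (t * s t))); [|lra].
      rewrite (Rmax_right 0 (1 * (t * s t))); [|lra]. ring. }
rewrite RInt_plus; [|exact E1|].
2:{ apply: ex_RInt_plus; apply: ex_RInt_scal; assumption. }
rewrite RInt_plus; [|apply: ex_RInt_scal; assumption|apply: ex_RInt_scal; assumption].
rewrite RInt_scal; [|assumption]. rewrite RInt_scal; [|assumption].
unfold AE, PNE. fold f1 f2 f3.
unfold plus, scal; simpl; unfold plus, mult; simpl. ring.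
Qed.

Lemma edge_below_b a b r cs s i : EdgeOK a b r cs s -> List.In i cs -> i.1 <> b -> i.1 <= b - 4 * r.
Proof.
intros HE Hi Hne. have HE' := HE.
destruct HE' as [Hab [Hr [[Ga Ha] [[Gb Hb] [Hsep [Hnd [Hrg _]]]]]]].
have H1 := Hsep i (b, Gb) Hi Hb Hne. have H2 := Hrg i Hi. simpl in H1.
rewrite Rabs_left1 in H1; lra.
Qed.

Lemma edge_t0 a b r cs s : EdgeOK a b r cs s ->
  a < b - 3 * r / 2 < b /\ (forall i, List.In i cs -> r <= Rabs (b - 3 * r / 2 - i.1)) /\
  wB r cs (b - 3 * r / 2) = 1.
Proof.
intros HE. have HE' := HE.
destruct HE' as [Hab [Hr [[Ga Ha] [[Gb Hb] [Hsep [Hnd [Hrg _]]]]]]].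
have Hfar : forall i, List.In i cs -> r <= Rabs (b - 3 * r / 2 - i.1).
{ intros i Hi. destruct (Req_dec i.1 b) as [E|E].
  - rewrite E. rewrite Rabs_left; lra.
  - have := edge_below_b a b r cs s i HE Hi E. intros. rewrite Rabs_right; lra. }
split; [|split; [exact Hfar|]].
- have := edge_below_b a b r cs s (a, Ga) HE Ha. simpl. intros H.
  have : a <= b - 4 * r. apply H. lra. lra.
- apply wB_far. intros i Hi. apply bump_zero; [lra|]. exact (Hfar i Hi).
Qed.

Lemma edge_PN_nonneg a b r cs s sg : EdgeOK a b r cs s -> 0 <= PNE r cs s sg a b.
Proof.
intros HE. have HE' := HE. destruct HE' as [Hab _].
apply RInt_ge_0. lra.
apply: (@ex_RInt_continuous R_CompleteNormedModule). intros z Hz.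
rewrite Rmin_left in Hz; [|lra]. rewrite Rmax_right in Hz; [|lra].
apply (edge_cont a b r cs s sg z HE Hz).
intros x _. apply Rmult_le_pos. apply wB_range. apply Rmax_l.
Qed.

Lemma edge_PN_pos a b r cs s sg : EdgeOK a b r cs s ->
  0 < sg * ((b - 3 * r / 2) * s (b - 3 * r / 2)) -> 0 < PNE r cs s sg a b.
Proof.
intros HE Hp. have HE' := HE. destruct HE' as [Hab _].
destruct (edge_t0 a b r cs s HE) as [Ht0 [_ Hw]].
apply (RInt_pos_point _ a b (b - 3 * r / 2) Ht0).
- intros x Hx. apply (edge_cont a b r cs s sg x HE Hx).
- intros x _. apply Rmult_le_pos. apply wB_range. apply Rmax_l.
- rewrite Hw Rmult_1_l. rewrite Rmax_right; lra.
Qed.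

Lemma sgn_pos x : 0 < x -> sgn x = 1.
Proof. intros H. unfold sgn. destruct (Rlt_dec 0 x); [reflexivity|lra]. Qed.
Lemma sgn_neg x : x < 0 -> sgn x = -1.
Proof. intros H. unfold sgn. destruct (Rlt_dec 0 x); [lra|]. destruct (Rlt_dec x 0); [reflexivity|lra]. Qed.
Lemma sgn_zero : sgn 0 = 0.
Proof. unfold sgn. destruct (Rlt_dec 0 0); [lra|]. destruct (Rlt_dec 0 0); [lra|reflexivity]. Qed.
Lemma sgn_nz x : x <> 0 -> sgn x <> 0.
Proof. intros H. destruct (Rlt_dec 0 x). rewrite sgn_pos; lra. rewrite sgn_neg; lra. Qed.
Lemma sgn_nz_inv x : sgn x <> 0 -> x <> 0.
Proof. intros H E. subst. apply H. apply sgn_zero. Qed.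

Lemma sgn_opp_prod g y : sgn g = - sgn y -> sgn y <> 0 -> g * sgn y < 0.
Proof.
intros E Hy.
destruct (Rtotal_order y 0) as [h|[h|h]].
- rewrite (sgn_neg y h) in E |- *. destruct (Rtotal_order g 0) as [k|[k|k]].
  + rewrite sgn_neg in E; lra.
  + subst. rewrite sgn_zero in E; lra.
  + lra.
- subst. rewrite sgn_zero in Hy. lra.
- rewrite (sgn_pos y h) in E |- *. destruct (Rtotal_order g 0) as [k|[k|k]].
  + lra.
  + subst. rewrite sgn_zero in E; lra.
  + rewrite sgn_pos in E; lra.
Qed.

Lemma sgn_loc (c0 : R -> R) t : continuous c0 t -> c0 t <> 0 ->
  locally t (fun y => sgn (c0 y) = sgn (c0 t)).
Proof.
intros Hc Hn.
have : locally t (fun y => Rabs (c0 y - c0 t) < Rabs (c0 t)).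
{ have HH := Hc (fun z => Rabs (z - c0 t) < Rabs (c0 t)). apply HH.
  apply (loc_of (c0 t) _ (Rabs (c0 t))). apply Rabs_pos_lt, Hn. intros y Hy. exact Hy. }
apply filter_imp. intros y Hy. apply Rabs_lt_between in Hy.
destruct (Rlt_dec 0 (c0 t)).
- rewrite Rabs_right in Hy; [|lra]. rewrite !sgn_pos; lra.
- rewrite Rabs_left in Hy; [|lra]. rewrite !sgn_neg; lra.
Qed.

Lemma smooth_on_LSm g p d y : smooth_on g p d -> Rabs (y - p) < d -> LSm g y.
Proof.
intros Hs Hy. apply (loc_of y _ (d - Rabs (y - p))). lra.
intros z Hz n. apply Hs.
have := Rabs_triang (z - y) (y - p). have -> : z - y + (y - p) = z - p by ring. lra.
Qed.

Lemma mono_aux a b (c0 rho0 : R -> R) :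
  (forall t, a < t < b -> 0 < rho0 t /\ forall n, ex_derive_n rho0 n t) ->
  (forall x y, a < x -> x < y -> y < b -> c0 y - c0 x = RInt (fun t => t * rho0 t) x y) ->
  forall x y, a < x -> x < y -> y < b ->
    (0 <= x -> c0 x < c0 y) /\ (y <= 0 -> c0 y < c0 x).
Proof.
intros Hr Hc x y Hx Hxy Hy.
have Hcont : forall t, x <= t <= y -> continuous (fun t => t * rho0 t) t.
{ intros t Ht. apply (continuous_mult (fun t => t) rho0). apply continuous_id.
  apply: ex_derive_continuous. destruct (Hr t ltac:(lra)) as [_ Hd]. exact (Hd 1%nat). }
split; intros H0.
- have : 0 < RInt (fun t => t * rho0 t) x y.
  { apply RInt_gt_0; [exact Hxy| |exact Hcont].
    intros t Ht. apply Rmult_lt_0_compat; [lra|]. apply Hr; lra. }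
  have := Hc x y Hx Hxy Hy. lra.
- have : RInt (fun t => t * rho0 t) x y < 0.
  { have E : RInt (fun t => t * rho0 t) x y = - RInt (fun t => (- t) * rho0 t) x y.
    { rewrite -(Rmult_1_l (RInt (fun t => - t * rho0 t) x y)).
      have -> : - (1 * RInt (fun t => - t * rho0 t) x y) = scal (-1) (RInt (fun t => - t * rho0 t) x y).
      { unfold scal; simpl; unfold mult; simpl. ring. }
      rewrite -RInt_scal. apply RInt_ext. intros; unfold scal; simpl; unfold mult; simpl; ring.
      apply: (@ex_RInt_continuous R_CompleteNormedModule). intros z Hz.
      rewrite Rmin_left in Hz; [|lra]. rewrite Rmax_right in Hz; [|lra].
      apply (continuous_ext (fun t => opp (t * rho0 t))). intro; unfold opp; simpl; ring.
      apply: continuous_opp. apply Hcont; lra. }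
    rewrite E.
    have : 0 < RInt (fun t => - t * rho0 t) x y.
    { apply RInt_gt_0; [exact Hxy| |].
      intros t Ht. apply Rmult_lt_0_compat; [lra|]. apply Hr; lra.
      intros t Ht. apply (continuous_ext (fun t => opp (t * rho0 t))). intro; unfold opp; simpl; ring.
      apply: continuous_opp. apply Hcont; lra. }
    lra. }
  have := Hc x y Hx Hxy Hy. lra.
Qed.

Lemma list_one (Q : R -> Prop) : (forall x y, Q x -> Q y -> x = y) ->
  exists l : seq R, List.NoDup l /\ forall t, List.In t l <-> Q t.
Proof.
intros Hu. destruct (classic (exists z, Q z)) as [[z Hz]|Hn].
- exists [:: z]. split. constructor. intros []. constructor.
  intros t. split. intros [E|[]]. subst; exact Hz. intros Ht. left. apply Hu; assumption.
- exists [::]. split. constructor. intros t. split. intros []. intros Ht. apply Hn. exists t; exact Ht.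
Qed.

Lemma list_union (Q1 Q2 : R -> Prop) : (forall x, Q1 x -> Q2 x -> False) ->
  (exists l : seq R, List.NoDup l /\ forall t, List.In t l <-> Q1 t) ->
  (exists l : seq R, List.NoDup l /\ forall t, List.In t l <-> Q2 t) ->
  exists l : seq R, List.NoDup l /\ forall t, List.In t l <-> (Q1 t \/ Q2 t).
Proof.
intros Hd [l1 [N1 H1]] [l2 [N2 H2]]. exists (l1 ++ l2). split.
- apply List.NoDup_app; auto. intros x Hx1 Hx2. apply (Hd x). apply H1, Hx1. apply H2, Hx2.
- intros t. rewrite List.in_app_iff. rewrite H1 H2. tauto.
Qed.

Lemma zeros_list a b (c0 : R -> R) :
  (forall x y, a < x -> x < y -> y < b -> (0 <= x -> c0 x < c0 y) /\ (y <= 0 -> c0 y < c0 x)) ->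
  exists l : seq R, List.NoDup l /\ forall t, List.In t l <-> (a < t < b /\ (t = 0 \/ c0 t = 0)).
Proof.
intros Hm.
have L1 : exists l : seq R, List.NoDup l /\ forall t, List.In t l <-> (a < t < b /\ t < 0 /\ c0 t = 0).
{ apply list_one. intros x y [Hx1 [Hx2 Hx3]] [Hy1 [Hy2 Hy3]].
  destruct (Rtotal_order x y) as [h|[h|h]]; [|exact h|]; exfalso.
  - have := proj2 (Hm x y ltac:(lra) h ltac:(lra)) ltac:(lra). lra.
  - have := proj2 (Hm y x ltac:(lra) h ltac:(lra)) ltac:(lra). lra. }
have L0 : exists l : seq R, List.NoDup l /\ forall t, List.In t l <-> (a < t < b /\ t = 0).
{ apply list_one. intros x y [_ Hx] [_ Hy]. congruence. }
have L2 : exists l : seq R, List.NoDup l /\ forall t, List.In t l <-> (a < t < b /\ 0 < t /\ c0 t = 0).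
{ apply list_one. intros x y [Hx1 [Hx2 Hx3]] [Hy1 [Hy2 Hy3]].
  destruct (Rtotal_order x y) as [h|[h|h]]; [|exact h|]; exfalso.
  - have := proj1 (Hm x y ltac:(lra) h ltac:(lra)) ltac:(lra). lra.
  - have := proj1 (Hm y x ltac:(lra) h ltac:(lra)) ltac:(lra). lra. }
have D1 : forall x, (a < x < b /\ x < 0 /\ c0 x = 0) -> (a < x < b /\ x = 0) -> False.
{ intros x [_ [h1 _]] [_ h2]; lra. }
have L01 := list_union _ _ D1 L1 L0.
have D2 : forall x, ((a < x < b /\ x < 0 /\ c0 x = 0) \/ (a < x < b /\ x = 0)) ->
   (a < x < b /\ 0 < x /\ c0 x = 0) -> False.
{ intros x [[_ [h1 _]]|[_ h1]] [_ [h2 _]]; lra. }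
have L012 := list_union _ _ D2 L01 L2.
destruct L012 as [l [Hn Hl]]. exists l. split. exact Hn.
intros t. rewrite Hl. split.
- intros [[[h1 [h2 h3]]|[h1 h2]]|[h1 [h2 h3]]]; split; auto.
- intros [h1 [h2|h2]]. left; right; auto.
  destruct (Rtotal_order t 0) as [h|[h|h]]. left; left; auto. left; right; auto. right; auto.
Qed.

Lemma seq_max (T : eqType) (g : T -> R) (s : seq T) (y : T) :
  exists2 w, w \in y :: s & forall x, x \in y :: s -> g x <= g w.
Proof.
elim: s y => [|z s IH] y.
- exists y. by rewrite in_cons eqxx.
  move=> x; rewrite in_cons => /orP [/eqP ->|//]. lra.
- destruct (IH z) as [w Hw Hmax].
  destruct (Rle_dec (g y) (g w)) as [h|h].
  + exists w. by rewrite in_cons Hw orbT.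
    move=> x; rewrite in_cons => /orP [/eqP ->|Hx]. exact h. apply Hmax, Hx.
  + exists y. by rewrite in_cons eqxx.
    move=> x; rewrite in_cons => /orP [/eqP ->|Hx]. lra. have := Hmax x Hx. lra.
Qed.


Definition Drel (V E : finType) (src tgt : E -> V) (Pz Nz : E -> bool) : rel V :=
  fun u v => [exists e, ((src e == u) && (tgt e == v) && Pz e) ||
                        ((tgt e == u) && (src e == v) && Nz e)].

Arguments Drel {V E}.

Lemma Drel_acyclic (V E : finType) (src tgt : E -> V) (fv : V -> R) (Pz Nz : E -> bool) :
  (forall e, fv (src e) < fv (tgt e)) ->
  (forall e1 e2, tgt e1 = tgt e2 -> Pz e1 -> Nz e2 -> False) ->
  forall u v, Drel src tgt Pz Nz u v -> ~ connect (Drel src tgt Pz Nz) v u.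
Proof.
intros Hf Hm u v Huv Hvu.
set D := Drel src tgt Pz Nz in Huv Hvu.
move/connectP: Hvu => [p Hp Hlast].
have Hcyc : cycle D (v :: p).
{ rewrite /cycle rcons_path Hp /= -Hlast. exact Huv. }
destruct (seq_max V fv p v) as [w Hw Hmax].
have Hprev := prev_cycle Hcyc Hw.
have Hnext := next_cycle Hcyc Hw.
have Hpin : prev (v :: p) w \in v :: p by rewrite mem_prev.
have Hnin : next (v :: p) w \in v :: p by rewrite mem_next.
move: Hprev => /existsP [e1 /orP [/andP [/andP [/eqP E1 /eqP E2] P1]|/andP [/andP [/eqP E1 /eqP E2] N1]]];
move: Hnext => /existsP [e2 /orP [/andP [/andP [/eqP F1 /eqP F2] P2]|/andP [/andP [/eqP F1 /eqP F2] N2]]].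
- have := Hmax _ Hnin. rewrite -F2 -F1. have := Hf e2. lra.
- apply (Hm e1 e2). congruence. exact P1. exact N2.
- have := Hmax _ Hpin. rewrite -E1 -E2. have := Hf e1. lra.
- have := Hmax _ Hpin. rewrite -E1 -E2. have := Hf e1. lra.
Qed.

Definition hpot (V : finType) (D : rel V) (v : V) : nat := #|[pred x | connect D x v]|.
Arguments hpot {V}.

Lemma hpot_lt (V : finType) (D : rel V) u v :
  D u v -> ~ connect D v u -> (hpot D u < hpot D v)%N.
Proof.
intros Huv Hvu. apply proper_card. apply/properP. split.
- apply/subsetP => x. rewrite !inE => Hx. exact (connect_trans Hx (connect1 Huv)).
- exists v. by rewrite inE connect0. rewrite inE. apply/negP. exact Hvu.
Qed.

Lemma fchoice {A B : Type} (P : A -> B -> Prop) : (forall a, exists b, P a b) -> exists f, forall a, P a (f a).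
Proof.
intros H. exists (fun a => proj1_sig (constructive_indefinite_description _ (H a))).
intro a. exact (proj2_sig (constructive_indefinite_description _ (H a))).
Qed.

Section S1.
Variables (V E : finType) (src tgt : E -> V) (fv : V -> R) (rho c : E -> R -> R)
  (U : gpoint V E -> gpoint V E -> Prop) (beta : gpoint V E -> gpoint V E -> R).
Variables (cs0 ct0 : E -> R).
Hypothesis Hf : forall e, fv (src e) < fv (tgt e).
Hypothesis Hrho : interior_density_ok src tgt fv rho.
Hypothesis Hcl : circ_limits src tgt fv rho c cs0 ct0.
Hypothesis H4 : forall xi, exceptional src tgt fv c xi ->
     openG src tgt fv (U xi) /\ U xi xi /\
     oneform_on src tgt fv (U xi) (beta xi) /\
     (forall y, onG src tgt fv y -> U xi y -> y <> xi -> ~ is_vertex y ->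
        sgn (beta xi y) = - sgn (cval c y)).

Definition VF (v : V) (dg : R * (R -> R)) : Prop :=
  0 < dg.1 /\ smooth_on dg.2 (fv v) dg.1 /\ beta (PV v) (PV v) = dg.2 (fv v) /\
  forall e t, incident src tgt v e -> fv (src e) < t < fv (tgt e) -> Rabs (t - fv v) < dg.1 ->
    U (PV v) (PE e t) /\ beta (PV v) (PE e t) = dg.2 t /\ sgn (dg.2 t) = - sgn (c e t).

Definition ZF (e : E) (z : R) (dg : R * (R -> R)) : Prop :=
  0 < dg.1 /\ smooth_on dg.2 z dg.1 /\
  forall t, fv (src e) < t < fv (tgt e) -> Rabs (t - z) < dg.1 ->
    U (PE e z) (PE e t) /\ beta (PE e z) (PE e t) = dg.2 t /\
    (t <> z -> sgn (dg.2 t) = - sgn (c e t)).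

Lemma vertex_data v : exists dg, VF v dg.
Proof.
have Hx : exceptional src tgt fv c (PV v) by split.
destruct (H4 _ Hx) as [Hop [Hself [Hform Hsg]]].
destruct (Hop (PV v) I Hself) as [d1 [Hd1 H1]].
destruct (Hform (PV v) I Hself) as [d2 [g [Hd2 [Hsm H2]]]].
exists (Rmin d1 d2, g). simpl. split; [apply Rmin_pos; assumption|]. split.
{ intros n y Hy. apply Hsm. have := Rmin_r d1 d2. simpl in *. lra. }
split.
{ apply (H2 (PV v) I). reflexivity. exact Hself. }
intros e t Hinc Ht Hd.
have Hd1' := Rmin_l d1 d2. have Hd2' := Rmin_r d1 d2.
have HU : U (PV v) (PE e t). { apply H1. exact Ht. simpl in *. split. exact Hinc. lra. }
have Hb : beta (PV v) (PE e t) = g t.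
{ apply (H2 (PE e t) Ht). simpl in *. split. exact Hinc. lra. exact HU. }
split; [exact HU|]. split; [exact Hb|].
simpl. rewrite -Hb. apply (Hsg (PE e t) Ht HU). discriminate. simpl. tauto.
Qed.

Lemma zdata e z : exists dg, (fv (src e) < z < fv (tgt e) /\ (z = 0 \/ c e z = 0)) -> ZF e z dg.
Proof.
destruct (classic (fv (src e) < z < fv (tgt e) /\ (z = 0 \/ c e z = 0))) as [Hz|Hz];
  [|exists (1, fun _ => 0); intros H; contradiction].
have Hx : exceptional src tgt fv c (PE e z) by split; [exact (proj1 Hz)|exact (proj2 Hz)].
destruct (H4 _ Hx) as [Hop [Hself [Hform Hsg]]].
destruct (Hop (PE e z) (proj1 Hz) Hself) as [d1 [Hd1 H1]].
destruct (Hform (PE e z) (proj1 Hz) Hself) as [d2 [g [Hd2 [Hsm H2]]]].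
exists (Rmin d1 d2, g). intros _. simpl. split; [apply Rmin_pos; assumption|]. split.
{ intros n y Hy. apply Hsm. have := Rmin_r d1 d2. simpl in *. lra. }
intros t Ht Hd.
have Hd1' := Rmin_l d1 d2. have Hd2' := Rmin_r d1 d2.
have HU : U (PE e z) (PE e t). { apply H1. exact Ht. simpl in *. split. reflexivity. lra. }
have Hb : beta (PE e z) (PE e t) = g t.
{ apply (H2 (PE e t) Ht). simpl in *. split. reflexivity. lra. exact HU. }
split; [exact HU|]. split; [exact Hb|].
intros Htz. simpl. rewrite -Hb. apply (Hsg (PE e t) Ht HU). intros EE; inversion EE; lra. simpl. tauto.
Qed.

Lemma zeros_exist e : exists l : seq R, List.NoDup l /\
  forall t, List.In t l <-> (fv (src e) < t < fv (tgt e) /\ (t = 0 \/ c e t = 0)).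
Proof.
apply zeros_list. apply (mono_aux _ _ (c e) (rho e)).
- intros t Ht. apply Hrho. exact Ht.
- intros x y Hx Hxy Hy. destruct (Hcl e) as [_ [_ [_ H]]]. apply H; assumption.
Qed.

End S1.

Lemma small_r {A : Type} (l : list A) (Q : A -> R -> Prop) :
  (forall x r r', 0 < r' -> r' <= r -> Q x r -> Q x r') ->
  (forall x, List.In x l -> exists r, 0 < r /\ Q x r) ->
  exists r, 0 < r /\ forall x, List.In x l -> Q x r.
Proof.
intros Hmono. induction l as [|y l IH]; intros H.
- exists 1. split. lra. intros x [].
- destruct (H y (or_introl erefl)) as [r1 [Hr1 Q1]].
  destruct IH as [r2 [Hr2 Q2]]. intros x Hx. apply H. right; exact Hx.
  exists (Rmin r1 r2). split. apply Rmin_pos; assumption.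
  intros x [Hx|Hx].
  + subst. apply (Hmono _ r1). apply Rmin_pos; assumption. apply Rmin_l. exact Q1.
  + apply (Hmono _ r2). apply Rmin_pos; assumption. apply Rmin_r. apply Q2, Hx.
Qed.

Lemma In_of_mem (T : eqType) (x : T) (s : seq T) : x \in s -> List.In x s.
Proof.
elim: s => [|y s IH] //=. rewrite in_cons => /orP [/eqP ->|H]. left; reflexivity. right; apply IH, H.
Qed.

Lemma In_enum (E : finType) (e : E) : List.In e (enum E).
Proof. apply In_of_mem. by rewrite mem_enum. Qed.

Lemma radius_exists (E : finType) (L : E -> list R) (ds : E -> list R) :
  (forall e d, List.In d (ds e) -> 0 < d) ->
  exists r, 0 < r /\ forall e,
    (forall p q, List.In p (L e) -> List.In q (L e) -> p <> q -> 4 * r <= Rabs (p - q)) /\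
    (forall d, List.In d (ds e) -> 2 * r <= d).
Proof.
intros Hds.
destruct (small_r (enum E) (fun e r =>
    (forall p q, List.In p (L e) -> List.In q (L e) -> p <> q -> 4 * r <= Rabs (p - q)) /\
    (forall d, List.In d (ds e) -> 2 * r <= d))) as [r [Hr Hq]].
- intros x r r' Hr' Hle [H1 H2]. split.
  + intros p q Hp Hq Hpq. have := H1 p q Hp Hq Hpq. lra.
  + intros d Hd. have := H2 d Hd. lra.
- intros e _.
  destruct (small_r (List.list_prod (L e) (L e)) (fun pq r => pq.1 <> pq.2 -> 4 * r <= Rabs (pq.1 - pq.2)))
    as [r1 [Hr1 Q1]].
  + intros x r r' Hr' Hle H Hne. have := H Hne. lra.
  + intros [p q] _. destruct (Req_dec p q) as [E1|E1].
    * exists 1. split. lra. intros Hne. contradiction.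
    * exists (Rabs (p - q) / 4). split.
      -- apply Rdiv_lt_0_compat; [apply Rabs_pos_lt; intros h; apply E1; lra|lra].
      -- intros _. simpl. lra.
  + destruct (small_r (ds e) (fun d r => 2 * r <= d)) as [r2 [Hr2 Q2]].
    * intros x r r' _ Hle H. lra.
    * intros d Hd. exists (d / 2). split. have := Hds e d Hd. lra. lra.
    * exists (Rmin r1 r2). split. apply Rmin_pos; assumption. split.
      -- intros p q Hp Hq Hpq. have := Q1 (p, q) (List.in_prod _ _ _ _ Hp Hq) Hpq. simpl.
         have := Rmin_l r1 r2. lra.
      -- intros d Hd. have := Q2 d Hd. have := Rmin_r r1 r2. lra.
- exists r. split. exact Hr. intros e. apply Hq. apply In_enum.
Qed.

Lemma map_fst_pair (h : R -> R -> R) (l : seq R) : map fst (map (fun z => (z, h z)) l) = l.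
Proof. elim: l => [|x l IH] //=. by rewrite IH. Qed.

Section S2.
Variables (V E : finType) (src tgt : E -> V) (fv : V -> R) (rho c : E -> R -> R)
  (U : gpoint V E -> gpoint V E -> Prop) (beta : gpoint V E -> gpoint V E -> R).
Variables (cs0 ct0 : E -> R).
Hypothesis Hf : forall e, fv (src e) < fv (tgt e).
Hypothesis Hcl : circ_limits src tgt fv rho c cs0 ct0.
Variables (gV : V -> R -> R) (dV : V -> R).
Hypothesis HV : forall v, @VF V E src tgt fv c U beta v (dV v, gV v).
Variables (zs : E -> seq R) (gZ : E -> R -> R -> R) (dZ : E -> R -> R).
Hypothesis Hzs : forall e, List.NoDup (zs e) /\
  forall t, List.In t (zs e) <-> (fv (src e) < t < fv (tgt e) /\ (t = 0 \/ c e t = 0)).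
Hypothesis HZ : forall e z, (fv (src e) < z < fv (tgt e) /\ (z = 0 \/ c e z = 0)) ->
  @ZF V E src tgt fv c U beta e z (dZ e z, gZ e z).
Variable r : R.
Hypothesis Hr0 : 0 < r.
Hypothesis Hr : forall e,
    (forall p q, List.In p (fv (src e) :: fv (tgt e) :: zs e) ->
                 List.In q (fv (src e) :: fv (tgt e) :: zs e) -> p <> q -> 4 * r <= Rabs (p - q)) /\
    (forall d, List.In d (dV (src e) :: dV (tgt e) :: map (dZ e) (zs e)) -> 2 * r <= d).

Definition cse (e : E) : seq (R * (R -> R)) :=
  (fv (src e), gV (src e)) :: (fv (tgt e), gV (tgt e)) :: map (fun z => (z, gZ e z)) (zs e).
Definition se (e : E) (t : R) : R := sgn (c e t).

Lemma cse_fst e : map fst (cse e) = fv (src e) :: fv (tgt e) :: zs e.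
Proof. rewrite /cse /=. by rewrite map_fst_pair. Qed.

Lemma cse_in e i : List.In i (cse e) ->
  i = (fv (src e), gV (src e)) \/ i = (fv (tgt e), gV (tgt e)) \/
  (List.In i.1 (zs e) /\ i = (i.1, gZ e i.1)).
Proof.
rewrite /cse /=. intros [H|[H|H]]. left; auto. right; left; auto.
right; right. apply List.in_map_iff in H. destruct H as [z [E1 Hz]]. subst i. simpl. split; auto.
Qed.

Lemma edgeOK e : EdgeOK (fv (src e)) (fv (tgt e)) r (cse e) (se e).
Proof.
have Hab := Hf e.
destruct (Hzs e) as [Hnd Hzc].
destruct (Hr e) as [Hsep Hrad].
have HVs := HV (src e). have HVt := HV (tgt e).
destruct HVs as [dVs [smVs [_ sgVs]]]. destruct HVt as [dVt [smVt [_ sgVt]]]. simpl in *.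
have RVs : 2 * r <= dV (src e) by apply Hrad; left.
have RVt : 2 * r <= dV (tgt e) by apply Hrad; right; left.
have RZ : forall z, List.In z (zs e) -> 2 * r <= dZ e z.
{ intros z Hz. apply Hrad. right; right. apply List.in_map. exact Hz. }
have Hfst : forall i, List.In i (cse e) -> List.In i.1 (fv (src e) :: fv (tgt e) :: zs e).
{ intros i Hi. rewrite -cse_fst. apply List.in_map. exact Hi. }
split; [exact Hab|]. split; [exact Hr0|].
split. { eexists. left. reflexivity. }
split. { eexists. right. left. reflexivity. }
split. { intros i j Hi Hj Hne. apply Hsep; [apply Hfst, Hi|apply Hfst, Hj|exact Hne]. }
split.
{ rewrite cse_fst. constructor.
  - intros [H|H]. lra. apply Hzc in H. lra.
  - constructor. intros H. apply Hzc in H. lra. exact Hnd. }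
split.
{ intros i Hi. destruct (cse_in e i Hi) as [E1|[E1|[Hz E1]]].
  subst i; simpl; lra. subst i; simpl; lra. apply Hzc in Hz. lra. }
split.
{ intros i Hi y Hy. destruct (cse_in e i Hi) as [E1|[E1|[Hz E1]]]; rewrite E1 in Hy |- *; simpl in *.
  - apply (smooth_on_LSm _ _ _ _ smVs). lra.
  - apply (smooth_on_LSm _ _ _ _ smVt). lra.
  - destruct (HZ e i.1 (proj1 (Hzc _) Hz)) as [dz [smz _]]. simpl in *.
    apply (smooth_on_LSm _ _ _ _ smz). have := RZ _ Hz. lra. }
split.
{ intros i Hi t Ht Hti Htn Hs. unfold se in *.
  destruct (cse_in e i Hi) as [E1|[E1|[Hz E1]]]; rewrite E1 in Hti Htn |- *; simpl in *.
  - apply sgn_opp_prod; [|exact Hs]. apply (sgVs e t). by rewrite /incident eqxx. exact Ht. lra.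
  - apply sgn_opp_prod; [|exact Hs]. apply (sgVt e t). by rewrite /incident eqxx orbT. exact Ht. lra.
  - destruct (HZ e i.1 (proj1 (Hzc _) Hz)) as [dz [smz sgz]]. simpl in *.
    apply sgn_opp_prod; [|exact Hs]. apply (sgz t Ht). have := RZ _ Hz. lra. exact Htn. }
{ intros t Ht Hnc.
  have Hnz : ~ (t = 0 \/ c e t = 0).
  { intros H. apply (Hnc (t, gZ e t)).
    rewrite /cse /=. right; right. apply (List.in_map (fun z => (z, gZ e z))). apply Hzc. split; assumption.
    reflexivity. }
  have Hc0 : c e t <> 0 by tauto.
  have Ht0 : t <> 0 by tauto.
  unfold se. split. apply sgn_nz, Hc0. split. exact Ht0.
  apply sgn_loc; [|exact Hc0]. destruct (Hcl e) as [Hc _]. apply Hc. exact Ht. }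
Qed.


Definition t0 (e : E) : R := fv (tgt e) - 3 * r / 2.

Lemma t0_props e : (fv (src e) < t0 e < fv (tgt e)) /\ (c e (t0 e) <> 0) /\ (t0 e <> 0) /\
  (forall z, t0 e <= z -> z < fv (tgt e) -> fv (src e) < z -> ~ (z = 0 \/ c e z = 0)).
Proof.
have HE := edgeOK e.
destruct (edge_t0 _ _ _ _ _ HE) as [Ht0 [Hfar _]].
destruct (Hzs e) as [_ Hzc].
have Hno : forall z, t0 e <= z -> z < fv (tgt e) -> fv (src e) < z -> ~ (z = 0 \/ c e z = 0).
{ intros z Hz Hz' Haz Hex.
  have Hin : List.In (z, gZ e z) (cse e).
  { rewrite /cse /=. right; right. apply (List.in_map (fun z => (z, gZ e z))). apply Hzc. split; [lra|exact Hex]. }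
  have := edge_below_b _ _ _ _ _ _ HE Hin. simpl. intros H. have := H ltac:(lra). unfold t0 in Hz. lra. }
have Hnc : forall i, List.In i (cse e) -> i.1 <> t0 e.
{ intros i Hi Ei. have := Hfar i Hi. rewrite Ei. unfold t0. rewrite Rminus_diag Rabs_R0. lra. }
destruct HE as [_ [_ [_ [_ [_ [_ [_ [_ [_ Hloc]]]]]]]]].
destruct (Hloc (t0 e) Ht0 Hnc) as [Hs [Hz0 _]].
split; [exact Ht0|]. split. unfold se in Hs. apply sgn_nz_inv, Hs. split. exact Hz0. exact Hno.
Qed.

Lemma t0_sign_t e : (0 < fv (tgt e) -> 0 < t0 e) /\ (fv (tgt e) <= 0 -> t0 e < 0).
Proof.
destruct (t0_props e) as [Ht0 [_ [_ Hno]]].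
split; intros H.
- destruct (Rle_dec 0 (fv (src e))) as [h|h]. lra.
  destruct (Rlt_dec 0 (t0 e)) as [h2|h2]. exact h2.
  exfalso. apply (Hno 0). lra. lra. lra. left; reflexivity.
- unfold t0 in *. lra.
Qed.

Lemma t0_sign_c e : (0 < ct0 e -> 0 < c e (t0 e)) /\ (ct0 e < 0 -> c e (t0 e) < 0).
Proof.
destruct (t0_props e) as [Ht0 [Hc0 [_ Hno]]].
destruct (Hcl e) as [Hcont [_ [Hlim _]]].
have Hcpt : forall x, fv (src e) < x < fv (tgt e) -> continuity_pt (c e) x.
{ intros x Hx. apply continuity_pt_filterlim. apply Hcont. exact Hx. }
have Near : forall eps, 0 < eps -> exists t1, t0 e < t1 < fv (tgt e) /\ Rabs (c e t1 - ct0 e) < eps.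
{ intros eps Heps.
  have HH := Hlim (fun y => Rabs (y - ct0 e) < eps).
  have HL : locally (ct0 e) (fun y => Rabs (y - ct0 e) < eps).
  { apply (loc_of _ _ eps Heps). intros y Hy. exact Hy. }
  have := HH HL. intros Hw. destruct (loc_to _ _ Hw) as [d [Hd Hdy]].
  exists (Rmax ((t0 e + fv (tgt e)) / 2) (fv (tgt e) - d / 2)).
  have h1 := Rmax_l ((t0 e + fv (tgt e)) / 2) (fv (tgt e) - d / 2).
  have h2 := Rmax_r ((t0 e + fv (tgt e)) / 2) (fv (tgt e) - d / 2).
  have h3 : Rmax ((t0 e + fv (tgt e)) / 2) (fv (tgt e) - d / 2) < fv (tgt e).
  { apply Rmax_lub_lt; lra. }
  split. lra. apply Hdy. apply Rabs_lt_between. lra. exact h3. }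
split; intros Hct.
- destruct (Rlt_dec 0 (c e (t0 e))) as [h|h]; [exact h|]. exfalso.
  have Hneg : c e (t0 e) < 0 by lra.
  destruct (Near (ct0 e) Hct) as [t1 [Ht1 Hc1]]. apply Rabs_lt_between in Hc1.
  destruct (Ranalysis5.IVT_interv (c e) (t0 e) t1) as [z [Hz Hcz]].
  + intros x Hx. apply Hcpt. lra.
  + lra.
  + exact Hneg.
  + lra.
  + apply (Hno z). lra. lra. lra. right; exact Hcz.
- destruct (Rlt_dec (c e (t0 e)) 0) as [h|h]; [exact h|]. exfalso.
  have Hpos : 0 < c e (t0 e) by lra.
  destruct (Near (- ct0 e) ltac:(lra)) as [t1 [Ht1 Hc1]]. apply Rabs_lt_between in Hc1.
  destruct (Ranalysis5.IVT_interv (fun y => - c e y) (t0 e) t1) as [z [Hz Hcz]].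
  + intros x Hx. apply continuity_pt_opp. apply Hcpt. lra.
  + lra.
  + lra.
  + lra.
  + apply (Hno z). lra. lra. lra. right; lra.
Qed.


Hypothesis Hdeg : forall v, (deg src tgt v == 1)%N
             || ((indeg tgt v == 2)%N && (outdeg src v == 1)%N)
             || ((indeg tgt v == 1)%N && (outdeg src v == 2)%N).
Hypothesis Hbal : balanced_at src tgt cs0 ct0.

Definition Ae (e : E) : R := AE r (cse e) (fv (src e)) (fv (tgt e)).
Definition Pe (e : E) : R := PNE r (cse e) (se e) (-1) (fv (src e)) (fv (tgt e)).
Definition Ne (e : E) : R := PNE r (cse e) (se e) 1 (fv (src e)) (fv (tgt e)).
Definition Pz (e : E) : bool := if Rle_dec (Pe e) 0 then true else false.
Definition Nz (e : E) : bool := if Rle_dec (Ne e) 0 then true else false.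

Lemma t0_se_nz e : t0 e * se e (t0 e) <> 0.
Proof.
destruct (t0_props e) as [_ [Hc [Ht _]]]. unfold se.
apply Rmult_integral_contrapositive. split. exact Ht. apply sgn_nz, Hc.
Qed.

Lemma t0_eq e : t0 e = fv (tgt e) - 3 * r / 2.
Proof. reflexivity. Qed.

Lemma Pz_sign e : Pz e -> 0 < t0 e * se e (t0 e).
Proof.
unfold Pz. destruct (Rle_dec (Pe e) 0) as [h|h]; [intros _|discriminate].
destruct (Rlt_dec 0 (t0 e * se e (t0 e))) as [k|k]; [exact k|]. exfalso.
have := t0_se_nz e. intros Hnz.
have Hpos : 0 < Pe e.
{ unfold Pe. apply (edge_PN_pos _ _ _ _ _ (-1) (edgeOK e)). rewrite -t0_eq. lra. }
lra.
Qed.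

Lemma Nz_sign e : Nz e -> t0 e * se e (t0 e) < 0.
Proof.
unfold Nz. destruct (Rle_dec (Ne e) 0) as [h|h]; [intros _|discriminate].
destruct (Rlt_dec (t0 e * se e (t0 e)) 0) as [k|k]; [exact k|]. exfalso.
have := t0_se_nz e. intros Hnz.
have Hpos : 0 < Ne e.
{ unfold Ne. apply (edge_PN_pos _ _ _ _ _ 1 (edgeOK e)). rewrite -t0_eq. lra. }
lra.
Qed.

Lemma PN_nonneg e : 0 <= Pe e /\ 0 <= Ne e.
Proof. split; [apply (edge_PN_nonneg _ _ _ _ _ (-1) (edgeOK e))|apply (edge_PN_nonneg _ _ _ _ _ 1 (edgeOK e))]. Qed.

Lemma prod_pos_cases x y : 0 < x * y -> (0 < x /\ 0 < y) \/ (x < 0 /\ y < 0).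
Proof.
intros H. destruct (Rtotal_order x 0) as [h|[h|h]].
- destruct (Rtotal_order y 0) as [k|[k|k]].
  + right; split; assumption.
  + subst. rewrite Rmult_0_r in H. lra.
  + exfalso. have := Rmult_lt_compat_r y x 0 k h. lra.
- subst. rewrite Rmult_0_l in H. lra.
- destruct (Rtotal_order y 0) as [k|[k|k]].
  + exfalso. have := Rmult_lt_compat_l x y 0 h k. lra.
  + subst. rewrite Rmult_0_r in H. lra.
  + left; split; assumption.
Qed.

Lemma prod_pos_of x y : (0 < x /\ 0 < y) \/ (x < 0 /\ y < 0) -> 0 < x * y.
Proof.
intros [[h k]|[h k]]. apply Rmult_lt_0_compat; assumption.
have -> : x * y = (- x) * (- y) by ring. apply Rmult_lt_0_compat; lra.
Qed.

Lemma sgn_mul_pos x y : 0 < x * y -> 0 < sgn x * sgn y.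
Proof.
intros H. apply prod_pos_of. destruct (prod_pos_cases _ _ H) as [[h k]|[h k]].
- left. rewrite sgn_pos // sgn_pos //. lra.
- right. rewrite sgn_neg // sgn_neg //. lra.
Qed.

Lemma Hmerge e1 e2 : tgt e1 = tgt e2 -> Pz e1 -> Nz e2 -> False.
Proof.
intros Et P1 N2.
have S1 := Pz_sign e1 P1. have S2 := Nz_sign e2 N2.
have T : t0 e1 = t0 e2 by rewrite !t0_eq Et.
destruct (eqVneq e1 e2) as [E12|E12].
{ subst e2. lra. }
set w := tgt e1.
have Hin : (1 < indeg tgt w)%N.
{ apply/card_gt1P. exists e1, e2. split; [by rewrite inE|by rewrite inE -Et|exact E12]. }
have Hd3 : (deg src tgt w == 3)%N.
{ move: (Hdeg w).
  move=> /orP [/orP [H|/andP [H1 H2]]|/andP [H1 H2]].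
  - exfalso. move: H. rewrite /deg => /eqP H.
    have := leq_addr (outdeg src w) (indeg tgt w). rewrite H. move=> H3.
    have := leq_trans Hin H3. by [].
  - by rewrite /deg (eqP H1) (eqP H2).
  - exfalso. move: Hin. by rewrite (eqP H1). }
have Hs1 : src e1 != w.
{ apply/eqP => EE. have := Hf e1. rewrite EE. unfold w. lra. }
have Hs2 : src e2 != w.
{ apply/eqP => EE. have := Hf e2. rewrite EE -Et. unfold w. lra. }
have Hl1 : limit_at src cs0 ct0 w e1 = ct0 e1 by rewrite /limit_at (negbTE Hs1).
have Hl2 : limit_at src cs0 ct0 w e2 = ct0 e2 by rewrite /limit_at (negbTE Hs2).
have I1 : incident src tgt w e1 by rewrite /incident eqxx orbT.
have I2 : incident src tgt w e2 by rewrite /incident -Et eqxx orbT.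
have Hprod : 0 < ct0 e1 * ct0 e2.
{ apply prod_pos_of. destruct (Hbal w Hd3) as [H|H].
  - left. rewrite -Hl1 -Hl2. split; [apply H, I1|apply H, I2].
  - right. rewrite -Hl1 -Hl2. split; [apply H, I1|apply H, I2]. }
have Ht : 0 < t0 e1 * t0 e2.
{ rewrite -T. apply prod_pos_of. destruct (t0_sign_t e1) as [A1 A2].
  destruct (Rlt_dec 0 (fv (tgt e1))) as [h|h].
  - left. split; apply A1, h.
  - right. split; apply A2; lra. }
have Hc : 0 < c e1 (t0 e1) * c e2 (t0 e2).
{ apply prod_pos_of.
  destruct (t0_sign_c e1) as [B1 B2]. destruct (t0_sign_c e2) as [C1 C2].
  destruct (prod_pos_cases _ _ Hprod) as [[h k]|[h k]].
  - left. split; [apply B1, h|apply C1, k].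
  - right. split; [apply B2, h|apply C2, k]. }
have Hs := sgn_mul_pos _ _ Hc.
unfold se in S1, S2.
have HP : 0 < (t0 e1 * t0 e2) * (sgn (c e1 (t0 e1)) * sgn (c e2 (t0 e2))).
{ apply Rmult_lt_0_compat; assumption. }
have HN : (t0 e1 * sgn (c e1 (t0 e1))) * (t0 e2 * sgn (c e2 (t0 e2))) < 0.
{ have := Rmult_lt_compat_l _ _ 0 S1 S2. lra. }
have EQ : (t0 e1 * sgn (c e1 (t0 e1))) * (t0 e2 * sgn (c e2 (t0 e2))) =
         (t0 e1 * t0 e2) * (sgn (c e1 (t0 e1)) * sgn (c e2 (t0 e2))) by ring.
lra.
Qed.


Lemma bound_list {A : Type} (l : list A) (g : A -> R) : exists L, 0 < L /\ forall x, List.In x l -> Rabs (g x) < L.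
Proof.
induction l as [|y l [L [HL H]]].
- exists 1. split. lra. intros x [].
- exists (L + Rabs (g y) + 1). split. have := Rabs_pos (g y). lra.
  intros x [Hx|Hx]. subst. have := Rabs_pos (g x). lra. have := H x Hx. have := Rabs_pos (g y). lra.
Qed.

Lemma A_bound : exists L, 0 < L /\ forall e, Rabs (Ae e) < L.
Proof.
destruct (bound_list (enum E) Ae) as [L [HL H]]. exists L. split. exact HL.
intros e. apply H. apply In_enum.
Qed.

Variable L : R.
Hypothesis HL0 : 0 < L.
Hypothesis HL : forall e, Rabs (Ae e) < L.

Definition Dr : rel V := Drel src tgt Pz Nz.
Definition F (v : V) : R := - L * INR (hpot Dr v).
Definition De (e : E) : R := F (tgt e) - F (src e).

Lemma F_arc u v : Dr u v -> F v - F u <= - L.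
Proof.
intros Huv.
have H := @hpot_lt V Dr u v Huv (@Drel_acyclic V E src tgt fv Pz Nz Hf Hmerge u v Huv).
move/ltP: H => H.
have H2 : INR (S (hpot Dr u)) <= INR (hpot Dr v) by apply le_INR; exact H.
rewrite S_INR in H2. unfold F.
have := Rmult_le_compat_l L _ _ (Rlt_le _ _ HL0) H2. lra.
Qed.

Lemma De_Pz e : Pz e -> De e < Ae e.
Proof.
intros HP. have Harc : Dr (src e) (tgt e).
{ apply/existsP. exists e. by rewrite !eqxx HP. }
have := F_arc _ _ Harc. have := HL e. unfold De. intros H1 H2.
apply Rabs_lt_between in H1. lra.
Qed.

Lemma De_Nz e : Nz e -> Ae e < De e.
Proof.
intros HN. have Harc : Dr (tgt e) (src e).
{ apply/existsP. exists e. by rewrite !eqxx HN orbT. }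
have := F_arc _ _ Harc. have := HL e. unfold De. intros H1 H2.
apply Rabs_lt_between in H1. lra.
Qed.

Definition Kme (e : E) : R :=
  if Rlt_dec 0 (Pe e) then (Rmax (De e - Ae e) 0 + Pe e * Ne e) / Pe e else 1.
Definition Kpe (e : E) : R :=
  if Rlt_dec 0 (Ne e) then (Rmax (Ae e - De e) 0 + Pe e * Ne e) / Ne e else 1.

Lemma K_props e : 0 < Kme e /\ 0 < Kpe e /\ Ae e + Kme e * Pe e - Kpe e * Ne e = De e.
Proof.
destruct (PN_nonneg e) as [HP HN].
have HPN : ~ (Pe e <= 0 /\ Ne e <= 0).
{ intros [h1 h2]. apply (Hmerge e e erefl).
  unfold Pz; destruct (Rle_dec (Pe e) 0); [reflexivity|lra].
  unfold Nz; destruct (Rle_dec (Ne e) 0); [reflexivity|lra]. }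
have HPz : Pe e <= 0 -> De e < Ae e.
{ intros h. apply De_Pz. unfold Pz; destruct (Rle_dec (Pe e) 0); [reflexivity|lra]. }
have HNz : Ne e <= 0 -> Ae e < De e.
{ intros h. apply De_Nz. unfold Nz; destruct (Rle_dec (Ne e) 0); [reflexivity|lra]. }
have Mx1 := Rmax_r (De e - Ae e) 0. have Mx2 := Rmax_r (Ae e - De e) 0.
have Mx3 : Rmax (De e - Ae e) 0 - Rmax (Ae e - De e) 0 = De e - Ae e.
{ unfold Rmax. destruct (Rle_dec (De e - Ae e) 0); destruct (Rle_dec (Ae e - De e) 0); lra. }
unfold Kme, Kpe.
set X := Rmax (De e - Ae e) 0. set Y := Rmax (Ae e - De e) 0. have EXd : X = Rmax (De e - Ae e) 0 by reflexivity. have EYd : Y = Rmax (Ae e - De e) 0 by reflexivity. clearbody X Y.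
destruct (Rlt_dec 0 (Pe e)) as [p|p]; destruct (Rlt_dec 0 (Ne e)) as [n|n]; cbv beta iota delta [is_left].
- have PN : 0 < Pe e * Ne e by apply Rmult_lt_0_compat.
  have E1 : (X + Pe e * Ne e) / Pe e * Pe e = X + Pe e * Ne e by field; lra.
  have E2 : (Y + Pe e * Ne e) / Ne e * Ne e = Y + Pe e * Ne e by field; lra.
  split. apply Rdiv_lt_0_compat; lra. split. apply Rdiv_lt_0_compat; lra.
  rewrite E1 E2. lra.
- have N0 : Ne e = 0 by lra.
  have Hd := HNz ltac:(lra).
  have EX : X = De e - Ae e by (rewrite EXd Rmax_left; lra).
  have E1 : (X + Pe e * Ne e) / Pe e * Pe e = X + Pe e * Ne e by field; lra.
  split. apply Rdiv_lt_0_compat; [rewrite N0 EX; lra|lra]. split. lra.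
  rewrite E1 N0 EX. ring.
- have P0 : Pe e = 0 by lra.
  have Hd := HPz ltac:(lra).
  have EY : Y = Ae e - De e by (rewrite EYd Rmax_left; lra).
  have E2 : (Y + Pe e * Ne e) / Ne e * Ne e = Y + Pe e * Ne e by field; lra.
  split. lra. split. apply Rdiv_lt_0_compat; [rewrite P0 EY; lra|lra].
  rewrite E2 P0 EY. ring.
- exfalso. apply HPN. lra.
Qed.


Hypothesis HUs : forall v, U (PV v) (PV v).

Definition bf (x : gpoint V E) : R :=
  match x with
  | PV v => gV v (fv v)
  | PE e t => gE r (cse e) (fillf (Kme e) (Kpe e) (se e)) t
  end.

Lemma bf_vertex v e t : incident src tgt v e -> Rabs (t - fv v) < r / 2 -> bf (PE e t) = gV v t.
Proof.
intros Hinc Ht. simpl. move: Hinc. rewrite /incident => /orP [/eqP Hs|/eqP Ht'].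
- have Hi : List.In (fv (src e), gV (src e)) (cse e) by left.
  rewrite (edge_center _ _ _ _ _ _ _ _ t (edgeOK e) Hi); simpl; rewrite Hs //.
- have Hi : List.In (fv (tgt e), gV (tgt e)) (cse e) by right; left.
  rewrite (edge_center _ _ _ _ _ _ _ _ t (edgeOK e) Hi); simpl; rewrite Ht' //.
Qed.

Lemma bf_zero e z t : List.In z (zs e) -> Rabs (t - z) < r / 2 -> bf (PE e t) = gZ e z t.
Proof.
intros Hz Ht. simpl.
have Hi : List.In (z, gZ e z) (cse e).
{ rewrite /cse /=. right; right. apply (List.in_map (fun z => (z, gZ e z))). exact Hz. }
rewrite (edge_center _ _ _ _ _ _ _ _ t (edgeOK e) Hi) //.
Qed.

Lemma bf_oneform : oneform_on src tgt fv (fun _ => True) bf.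
Proof.
intros [v|e t] Hx _.
- destruct (HV v) as [dv [smv _]]. simpl in *.
  exists (Rmin (r / 2) (dV v)), (gV v). split. apply Rmin_pos; lra. split.
  { intros n y Hy. apply smv. have := Rmin_r (r / 2) (dV v). simpl in Hy. lra. }
  intros [w|e t] Hy Hin _; simpl in Hin |- *.
  + subst w. reflexivity.
  + destruct Hin as [Hinc Hd]. apply bf_vertex. exact Hinc. have := Rmin_l (r / 2) (dV v). lra.
- simpl in Hx.
  exists (Rmin (t - fv (src e)) (fv (tgt e) - t)), (gE r (cse e) (fillf (Kme e) (Kpe e) (se e))).
  have m1 := Rmin_l (t - fv (src e)) (fv (tgt e) - t).
  have m2 := Rmin_r (t - fv (src e)) (fv (tgt e) - t).
  split. apply Rmin_pos; lra. split.
  { intros n y Hy. simpl in Hy. apply Rabs_lt_between in Hy.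
    apply LSm_Sm. apply (edge_smooth _ _ _ _ _ _ _ _ (edgeOK e)). lra. }
  intros [w|e' s] Hy Hin _; simpl in Hin |- *.
  + contradiction.
  + destruct Hin as [Ee Hd]. subst e'. reflexivity.
Qed.

Lemma bf_nonzero x : onG src tgt fv x -> ~ exceptional src tgt fv c x -> bf x <> 0.
Proof.
intros Hx Hne. destruct x as [v|e t].
- exfalso. apply Hne. split; simpl; trivial.
- simpl in Hx.
  have Hnz : ~ (t = 0 \/ c e t = 0). { intros H. apply Hne. split; assumption. }
  destruct (Hzs e) as [_ Hzc].
  have Hnc : forall i, List.In i (cse e) -> i.1 <> t.
  { intros i Hi Ei. destruct (cse_in e i Hi) as [E1|[E1|[Hz E1]]].
    - rewrite E1 in Ei. simpl in Ei. lra.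
    - rewrite E1 in Ei. simpl in Ei. lra.
    - apply Hnz. rewrite -Ei. apply Hzc, Hz. }
  destruct (K_props e) as [Km [Kp _]].
  have := edge_sign _ _ _ _ _ _ _ t (edgeOK e) Km Kp Hx Hnc.
  simpl. intros H E0. rewrite E0 in H. lra.
Qed.

Lemma bf_coincide xi : exceptional src tgt fv c xi ->
  exists W, nbhd src tgt fv W xi /\
    forall y, onG src tgt fv y -> W y -> U xi y /\ bf y = beta xi y.
Proof.
intros Hxi. destruct xi as [v|e z].
- destruct (HV v) as [dv [_ [Hself Hsg]]]. simpl in *.
  exists (inball src tgt fv (PV v) (Rmin (r / 2) (dV v))). split.
  { exists (Rmin (r / 2) (dV v)). split. apply Rmin_pos; lra. intros y _ H; exact H. }
  intros [w|e t] Hy Hin; simpl in Hin.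
  + subst w. split. apply HUs. simpl. symmetry. exact Hself.
  + destruct Hin as [Hinc Hd].
    have m1 := Rmin_l (r / 2) (dV v). have m2 := Rmin_r (r / 2) (dV v).
    destruct (Hsg e t Hinc Hy ltac:(lra)) as [HU [Hb _]].
    split. exact HU. rewrite Hb. apply bf_vertex. exact Hinc. lra.
- destruct Hxi as [Hon Hex]. simpl in Hon.
  destruct (HZ e z (conj Hon Hex)) as [dz [_ Hz]]. simpl in *.
  destruct (Hzs e) as [_ Hzc].
  have Hzin : List.In z (zs e) by apply Hzc; split; assumption.
  exists (inball src tgt fv (PE e z) (Rmin (r / 2) (dZ e z))). split.
  { exists (Rmin (r / 2) (dZ e z)). split. apply Rmin_pos; lra. intros y _ H; exact H. }
  intros [w|e' t] Hy Hin; simpl in Hin.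
  + contradiction.
  + destruct Hin as [Ee Hd]. subst e'.
    have m1 := Rmin_l (r / 2) (dZ e z). have m2 := Rmin_r (r / 2) (dZ e z).
    destruct (Hz t Hy ltac:(lra)) as [HU [Hb _]].
    split. exact HU. rewrite Hb. apply bf_zero. exact Hzin. lra.
Qed.

Lemma edge_int_bf e : edge_int src tgt fv bf e = De e.
Proof.
unfold edge_int.
rewrite (RInt_ext _ (fun t => t * gE r (cse e) (fillf (Kme e) (Kpe e) (se e)) t)).
- rewrite (edge_integral _ _ _ _ _ _ _ (edgeOK e)).
  destruct (K_props e) as [_ [_ H]]. unfold Ae, Pe, Ne in H. lra.
- intros t Ht. have Hab := Hf e.
  rewrite Rmin_left in Ht; [|lra]. rewrite Rmax_right in Ht; [|lra].
  unfold bedge. destruct (Rle_dec t (fv (src e))); [lra|].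
  destruct (Rle_dec (fv (tgt e)) t); [lra|]. reflexivity.
Qed.

Lemma walk_tele s l : chain src tgt s l ->
  foldr Rplus 0 (map (fun s => if s.2 then edge_int src tgt fv bf s.1 else - edge_int src tgt fv bf s.1) (s :: l))
  = F (step_end src tgt (last s l)) - F (step_start src tgt s).
Proof.
elim: l s => [|s' l IH] s Hch.
- simpl. rewrite edge_int_bf /De /step_end /step_start. destruct s.2; ring.
- destruct Hch as [Hes Hch]. rewrite /= in IH |- *.
  have := IH s' Hch. simpl. intros ->. rewrite edge_int_bf /De.
  rewrite /step_end /step_start in Hes |- *. destruct s.2; rewrite Hes; ring.
Qed.

Lemma bf_exact : exact_f_form src tgt fv bf.
Proof.
intros [|s l] Hcw. destruct Hcw.
destruct Hcw as [Hch Hcl2].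
unfold walk_int. rewrite walk_tele //. rewrite Hcl2. ring.
Qed.

End S2.

Theorem proposition4p19 (V E : finType) (src tgt : E -> V) (fv : V -> R)
  (bnd : pred V) (M rho c : E -> R -> R)
  (U : gpoint V E -> gpoint V E -> Prop) (beta : gpoint V E -> gpoint V E -> R) :
  is_reeb_graph src tgt fv bnd ->
  log_smooth src tgt fv M rho ->
  balanced_circulation src tgt fv rho bnd c ->
  (forall xi, exceptional src tgt fv c xi ->
     openG src tgt fv (U xi) /\ U xi xi /\
     oneform_on src tgt fv (U xi) (beta xi) /\
     (forall y, onG src tgt fv y -> U xi y -> y <> xi -> ~ is_vertex y ->
        sgn (beta xi y) = - sgn (cval c y))) ->
  exists b : gpoint V E -> R,
    oneform_on src tgt fv (fun _ => True) b /\
    (forall x, onG src tgt fv x -> ~ exceptional src tgt fv c x -> b x <> 0) /\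
    (forall xi, exceptional src tgt fv c xi ->
       exists W, nbhd src tgt fv W xi /\
         forall y, onG src tgt fv y -> W y -> U xi y /\ b y = beta xi y) /\
    exact_f_form src tgt fv b.
Proof.
intros [Hf [_ [Hdeg _]]] [_ [Hrho _]] [cs0 [ct0 [Hcl [_ Hbal]]]] H4.
have HUs : forall v, U (PV v) (PV v).
{ intros v. have Hx : exceptional src tgt fv c (PV v) by split. apply (H4 _ Hx). }
destruct (fchoice _ (vertex_data V E src tgt fv c U beta H4)) as [dgV HV0].
set gV := fun v => (dgV v).2. set dV := fun v => (dgV v).1.
have HV : forall v, VF V E src tgt fv c U beta v (dV v, gV v).
{ intros v. rewrite /gV /dV -surjective_pairing. apply HV0. }
destruct (fchoice _ (zeros_exist V E src tgt fv rho c cs0 ct0 Hrho Hcl)) as [zs Hzs].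
destruct (fchoice (fun (ez : E * R) dg =>
   (fv (src ez.1) < ez.2 < fv (tgt ez.1) /\ (ez.2 = 0 \/ c ez.1 ez.2 = 0)) ->
   ZF V E src tgt fv c U beta ez.1 ez.2 dg)) as [dgZ HZ0].
{ intros [e z]. apply (zdata V E src tgt fv c U beta H4). }
set gZ := fun e z => (dgZ (e, z)).2. set dZ := fun e z => (dgZ (e, z)).1.
have HZ : forall e z, (fv (src e) < z < fv (tgt e) /\ (z = 0 \/ c e z = 0)) ->
  ZF V E src tgt fv c U beta e z (dZ e z, gZ e z).
{ intros e z H. rewrite /gZ /dZ -surjective_pairing. apply (HZ0 (e, z)). exact H. }
destruct (radius_exists E (fun e => fv (src e) :: fv (tgt e) :: zs e)
            (fun e => dV (src e) :: dV (tgt e) :: map (dZ e) (zs e))) as [r [Hr0 Hr]].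
{ intros e d [Hd|[Hd|Hd]].
  - subst d. apply (HV (src e)).
  - subst d. apply (HV (tgt e)).
  - apply List.in_map_iff in Hd. destruct Hd as [z [Ez Hz]]. subst d.
    apply (HZ e z). apply (proj2 (Hzs e)). exact Hz. }
destruct (A_bound V E src tgt fv gV zs gZ r) as [L [HL0 HL]].
exists (bf V E src tgt fv c gV zs gZ r L).
split; [|split; [|split]].
- eapply bf_oneform; eassumption.
- eapply bf_nonzero; eassumption.
- eapply bf_coincide; eassumption.
- eapply bf_exact; eassumption.
Qed.
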